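(* Consider NEAR-DGD$^+$ with $t(k)=k$, i.e. $\mathbf{x}_k=\mathbf{Z}^{k}\mathbf{y}_k$, $\mathbf{y}_{k+1}=\mathbf{x}_k-\alpha\nabla\mathbf{f}(\mathbf{x}_k)$, started from a common point $y_{i,0}=s_0$. Suppose each $f_i$ is $\mu_i$-strongly convex with $L_i$-Lipschitz gradient, $x^\star$ is the minimizer of $h=\sum_if_i$, $0<\alpha\le\min\{1/L,c_4\}$ and $\alpha c_2<1$. Let $\delta=\frac{c_2}{2(1-\alpha c_2)}$ and $c_3=\sqrt{\alpha(\alpha+\delta^{-1})}\,DL$. Then for all $k=0,1,2,\ldots$, $$\|\bar x_k-x^\star\|\le C\rho^k,\qquad C=\max\Big\{\|\bar x_0-x^\star\|,\ \frac{2c_3}{\sqrt{\alpha c_2}}\Big\},\quad \rho=\max\Big\{\beta,\ \sqrt{1-\tfrac{\alpha c_2}{4}}\Big\}.$$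
   Context: $\mathbf{Z}=\mathbf{W}\otimes I_p$ with $\mathbf{W}$ a symmetric doubly-stochastic $n\times n$ matrix of a connected network ($w_{ii}>0$, $w_{ij}>0$ iff neighbours), simple eigenvalue $1$, other eigenvalues in $(-1,1)$; $\beta\in(0,1)$ its second largest eigenvalue magnitude. $\nabla\mathbf{f}(\mathbf{x})=(\nabla f_1(x_1);\ldots;\nabla f_n(x_n))$, $\bar x_k=\frac1n\sum_ix_{i,k}$. Constants: $L=\max_iL_i$, $\mu_{\bar f}=\frac1n\sum_i\mu_i$, $L_{\bar f}=\frac1n\sum_iL_i$, $c_2=\frac{2\mu_{\bar f}L_{\bar f}}{\mu_{\bar f}+L_{\bar f}}$, $c_4=\frac{2}{\mu_{\bar f}+L_{\bar f}}$, $D=\|\mathbf{y}_0-\mathbf{u}^\star\|+\frac{\nu+4}{\nu}\|\mathbf{u}^\star\|$, $\mathbf{u}^\star=(\arg\min f_1;\ldots;\arg\min f_n)$, $\nu=2\alpha\min_i\frac{\mu_iL_i}{\mu_i+L_i}$. *)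

(* Defs.v *)
From Stdlib Require Import Reals Lra Relations.
Open Scope R_scope.

(* Vectors of R^p are represented as functions nat -> R; only the
   coordinates 0..p-1 are ever inspected (norms, inner products).
   Stacked vectors (x_1; ...; x_n) are functions nat -> (nat -> R). *)
Definition vec := nat -> R.
Definition svec := nat -> vec.

Fixpoint rsum (m : nat) (f : nat -> R) : R :=
  match m with O => 0 | S m' => rsum m' f + f m' end.

Fixpoint max_upto (m : nat) (f : nat -> R) : R :=
  match m with O => 0 | S O => f O | S m' => Rmax (max_upto m' f) (f m') end.
Fixpoint min_upto (m : nat) (f : nat -> R) : R :=
  match m with O => 0 | S O => f O | S m' => Rmin (min_upto m' f) (f m') end.

Definition dot (p : nat) (u v : vec) : R := rsum p (fun l => u l * v l).
Definition vnorm (p : nat) (v : vec) : R := sqrt (dot p v v).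
Definition vadd (u v : vec) : vec := fun l => u l + v l.
Definition vsub (u v : vec) : vec := fun l => u l - v l.
Definition vscal (a : R) (u : vec) : vec := fun l => a * u l.

Definition snorm (n p : nat) (y : svec) : R :=
  sqrt (rsum n (fun i => dot p (y i) (y i))).

Definition is_gradient (p : nat) (f : vec -> R) (g : vec -> vec) : Prop :=
  forall x : vec, forall eps : R, 0 < eps -> exists del : R, 0 < del /\
    forall h : vec, vnorm p h < del ->
      Rabs (f (vadd x h) - f x - dot p (g x) h) <= eps * vnorm p h.

Definition strongly_convex (p : nat) (mu : R) (f : vec -> R) (g : vec -> vec) : Prop :=
  forall x y : vec,
    f y >= f x + dot p (g x) (vsub y x) + mu / 2 * (vnorm p (vsub y x)) ^ 2.

Definition lipschitz_grad (p : nat) (L : R) (g : vec -> vec) : Prop :=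
  forall x y : vec, vnorm p (vsub (g x) (g y)) <= L * vnorm p (vsub x y).

Definition is_minimizer (f : vec -> R) (x : vec) : Prop := forall y, f x <= f y.

Definition symmetric_mx (n : nat) (W : nat -> nat -> R) : Prop :=
  forall i j, (i < n)%nat -> (j < n)%nat -> W i j = W j i.

Definition doubly_stochastic (n : nat) (W : nat -> nat -> R) : Prop :=
  (forall i j, (i < n)%nat -> (j < n)%nat -> 0 <= W i j) /\
  (forall i, (i < n)%nat -> rsum n (fun j => W i j) = 1) /\
  (forall j, (j < n)%nat -> rsum n (fun i => W i j) = 1).

Definition neighbours (n : nat) (W : nat -> nat -> R) (i j : nat) : Prop :=
  (i < n)%nat /\ (j < n)%nat /\ i <> j /\ 0 < W i j.

Definition connected_net (n : nat) (W : nat -> nat -> R) : Prop :=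
  forall i j, (i < n)%nat -> (j < n)%nat -> clos_refl_trans nat (neighbours n W) i j.

Definition mxv (n : nat) (W : nat -> nat -> R) (v : nat -> R) : nat -> R :=
  fun i => rsum n (fun j => W i j * v j).

Definition is_eigenvalue (n : nat) (W : nat -> nat -> R) (lam : R) : Prop :=
  exists v : nat -> R, (exists i, (i < n)%nat /\ v i <> 0) /\
    forall i, (i < n)%nat -> mxv n W v i = lam * v i.

(* 1 is a simple eigenvalue (W symmetric, so geometric = algebraic mult.):
   its eigenspace is spanned by the all-ones vector *)
Definition simple_eig_one (n : nat) (W : nat -> nat -> R) : Prop :=
  is_eigenvalue n W 1 /\
  forall v : nat -> R, (forall i, (i < n)%nat -> mxv n W v i = v i) ->
    forall i j, (i < n)%nat -> (j < n)%nat -> v i = v j.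

Definition other_eigs_in_open_unit (n : nat) (W : nat -> nat -> R) : Prop :=
  forall lam, is_eigenvalue n W lam -> lam <> 1 -> -1 < lam < 1.

Definition is_slem (n : nat) (W : nat -> nat -> R) (beta : R) : Prop :=
  (exists lam, is_eigenvalue n W lam /\ lam <> 1 /\ Rabs lam = beta) /\
  (forall lam, is_eigenvalue n W lam -> lam <> 1 -> Rabs lam <= beta).

(* Z y = (W (x) I_p) y *)
Definition Zmul (n : nat) (W : nat -> nat -> R) (y : svec) : svec :=
  fun i l => rsum n (fun j => W i j * y j l).

Fixpoint Zpow (n : nat) (W : nat -> nat -> R) (k : nat) (y : svec) : svec :=
  match k with O => y | S k' => Zmul n W (Zpow n W k' y) end.

Fixpoint near_dgd_y (n : nat) (W : nat -> nat -> R) (g : nat -> vec -> vec)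
    (alpha : R) (s0 : vec) (k : nat) : svec :=
  match k with
  | O => fun _ => s0
  | S k' =>
      let xk := Zpow n W k' (near_dgd_y n W g alpha s0 k') in
      fun i => vsub (xk i) (vscal alpha (g i (xk i)))
  end.

Definition near_dgd_x (n : nat) (W : nat -> nat -> R) (g : nat -> vec -> vec)
    (alpha : R) (s0 : vec) (k : nat) : svec :=
  Zpow n W k (near_dgd_y n W g alpha s0 k).

Definition avg (n : nat) (x : svec) : vec :=
  fun l => / INR n * rsum n (fun i => x i l).

(* Main.v *)
Require Import Defs.
From Stdlib Require Import Reals Lra Lia Psatz FunctionalExtensionality Classical.
From HB Require Import structures.
From mathcomp Require all_boot all_order all_algebra all_classical all_reals.
From mathcomp Require topology normedtype derive Rstruct Rstruct_topology.
Open Scope R_scope.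

Definition Nf n (v : nat -> R) : R := rsum n (fun j => Rmult (v j) (v j)).
Definition Qf n (B : nat -> nat -> R) (v : nat -> R) : R :=
  rsum n (fun i => Rmult (rsum n (fun j => Rmult (B i j) (v j)))
                        (rsum n (fun j => Rmult (B i j) (v j)))).

Module EVTm.
Import all_boot all_order all_algebra all_classical all_reals.
Import topology normedtype derive Rstruct Rstruct_topology.
Import Order.TTheory GRing.Theory Num.Theory.
Import numFieldNormedType.Exports.
Local Open Scope classical_set_scope.
Local Open Scope ring_scope.

Lemma contD k (f g : 'rV[R]_k -> R) : continuous f -> continuous g ->
  continuous (fun v => Rplus (f v) (g v)).
Proof. move=> Hf Hg x; exact: (@continuousD R R^o _ f g x (Hf x) (Hg x)). Qed.
Lemma contM k (f g : 'rV[R]_k -> R) : continuous f -> continuous g ->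
  continuous (fun v => Rmult (f v) (g v)).
Proof. move=> Hf Hg x; exact: (@continuousM R _ f g x (Hf x) (Hg x)). Qed.

Lemma cont_rsum k m (F : nat -> 'rV[R]_k -> R) :
  (forall i, continuous (F i)) -> continuous (fun v => rsum m (fun i => F i v)).
Proof.
move=> HF; elim: m => [|m IH] /=.
  exact: cst_continuous.
exact: contD.
Qed.

Lemma rsum_ext' m (f g : nat -> R) : (forall j, (j < m)%N -> f j = g j) -> rsum m f = rsum m g.
Proof.
elim: m => [|m IH] H //=.
rewrite IH ?H // => j Hj; apply: H; exact: ltnW.
Qed.

Lemma rsum_const' m c : rsum m (fun _ => c) = Rmult (INR m) c.
Proof.
elim: m => [|m IH] /=; first by rewrite Rmult_0_l.
rewrite IH; case: m {IH} => [|m] /=; lra.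
Qed.

Lemma rsum_nonneg' m (f : nat -> R) : (forall i, (i < m)%N -> Rle 0 (f i)) -> Rle 0 (rsum m f).
Proof.
elim: m => [|m IH] H /=; first lra.
have := H m (ltnSn m); have := IH (fun i Hi => H i (ltnW Hi)); lra.
Qed.

Lemma rsum_ge_term m (f : nat -> R) j : (forall i, (i < m)%N -> Rle 0 (f i)) ->
  (j < m)%N -> Rle (f j) (rsum m f).
Proof.
elim: m => [|m IH] // H Hj /=.
have H0 := @rsum_nonneg' m f (fun i Hi => H i (ltnW Hi)).
move: Hj; rewrite ltnS leq_eqVlt => /orP [/eqP ->|Hj].
  lra.
have := IH (fun i Hi => H i (ltnW Hi)) Hj; have := H m (ltnSn m); lra.
Qed.

Lemma evt_sphere m (B : nat -> nat -> R) :
  exists u : nat -> R, Nf m.+1 u = 1%R /\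
    forall v, Nf m.+1 v = 1%R -> Rle (Qf m.+1 B v) (Qf m.+1 B u).
Proof.
pose n := m.+1.
pose conv (v : 'rV[R]_n) : nat -> R := fun j => v ord0 (inord j).
have Hcoord : forall j, continuous (fun v : 'rV[R]_n => conv v j).
  move=> j; exact: (@coord_continuous R 1 n ord0 (inord j)).
have Hcq : continuous (fun v => Qf n B (conv v)).
  apply: cont_rsum => i; apply: contM; apply: cont_rsum => j;
  apply: contM => //; exact: cst_continuous.
have Hcn : continuous (fun v => Nf n (conv v)).
  apply: cont_rsum => j; exact: contM.
pose A := [set v : 'rV[R]_n | Nf n (conv v) = 1%R].
have A0 : A !=set0.
  exists (const_mx (Rinv (sqrt (INR n)))); rewrite /A /= /Nf.
  rewrite (@rsum_ext' _ _ (fun _ => Rmult (Rinv (sqrt (INR n))) (Rinv (sqrt (INR n))))).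
    rewrite rsum_const' -Rinv_mult sqrt_sqrt; last exact: pos_INR.
    apply: Rinv_r; apply: not_0_INR => //.
  by move=> j _; rewrite /conv !mxE.
have Acl : closed A.
  have := (proj1 (continuous_closedP _) Hcn [set 1%R] (@closed_eq _ 1%R)).
  by [].
have Abox : compact [set v : 'rV[R]_n | forall i, (`[(-1)%R, 1%R]%classic : set R) (v ord0 i)].
  apply: (@rV_compact R n (fun=> (`[(-1)%R, 1%R]%classic : set R))) => _.
  exact: segment_compact.
have Acp : compact A.
  apply: subclosed_compact Acl Abox _ => v Av i /=.
  have Hi : Rle (Rmult (conv v i) (conv v i)) 1%R.
    rewrite -Av; apply: (@rsum_ge_term n (fun j => Rmult (conv v j) (conv v j))).
      move=> j _; apply: Rle_0_sqr.
    exact: ltn_ord.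
  have -> : v ord0 i = conv v i by rewrite /conv inord_val.
  rewrite in_itv /=; apply/andP; split; apply/RleP; [change (Rle (Ropp R1) (conv v i)) | change (Rle (conv v i) R1)]; change (Rle (Rmult (conv v i) (conv v i)) R1) in Hi; nra.
have [c cA cmax] := @EVT_max_rV R n (fun v => Qf n B (conv v)) A A0 Acp
                       (continuous_subspaceT Hcq).
exists (conv c); split.
  by move: cA; rewrite inE.
move=> v Hv.
pose t : 'rV[R]_n := \row_j v (nat_of_ord j).
have Ht : forall j, (j < n)%N -> conv t j = v j.
  by move=> j Hj; rewrite /conv mxE inordK.
have -> : Qf n B v = Qf n B (conv t).
  apply: rsum_ext' => i _.
  by rewrite (@rsum_ext' _ (fun j => Rmult (B i j) (v j)) (fun j => Rmult (B i j) (conv t j))) // => j Hj; rewrite Ht.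
apply/RleP; apply: cmax; rewrite inE /A /=.
rewrite -Hv; apply: rsum_ext' => j Hj; by rewrite Ht.
Qed.
End EVTm.

Lemma evt_sphere : forall m (B : nat -> nat -> R),
  exists u : nat -> R, Nf (S m) u = 1 /\
    forall v, Nf (S m) v = 1 -> Qf (S m) B v <= Qf (S m) B u.
Proof.
  intros m B. destruct (EVTm.evt_sphere m B) as [u [H1 H2]].
  exists u. split; [exact H1|]. intros v Hv. apply H2. exact Hv.
Qed.

Lemma rsum_ext m (f g : nat -> R) :
  (forall i, (i < m)%nat -> f i = g i) -> rsum m f = rsum m g.
Proof.
  induction m as [|m IH]; intros H; simpl; [reflexivity|].
  rewrite IH by (intros; apply H; lia). rewrite (H m) by lia. reflexivity.
Qed.

Lemma rsum_plus m f g : rsum m (fun i => f i + g i) = rsum m f + rsum m g.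
Proof. induction m; simpl; [lra|]. rewrite IHm. lra. Qed.
Lemma rsum_minus m f g : rsum m (fun i => f i - g i) = rsum m f - rsum m g.
Proof. induction m; simpl; [lra|]. rewrite IHm. lra. Qed.
Lemma rsum_scal m c f : rsum m (fun i => c * f i) = c * rsum m f.
Proof. induction m; simpl; [lra|]. rewrite IHm. lra. Qed.
Lemma rsum_opp m f : rsum m (fun i => - f i) = - rsum m f.
Proof. induction m; simpl; [lra|]. rewrite IHm. lra. Qed.
Lemma rsum_const m c : rsum m (fun _ => c) = INR m * c.
Proof. induction m; [simpl; lra|]. rewrite S_INR. change (rsum m (fun _ => c) + c = (INR m + 1) * c). rewrite IHm. lra. Qed.
Lemma rsum_zero m : rsum m (fun _ => 0) = 0.
Proof. rewrite rsum_const. lra. Qed.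

Lemma rsum_nonneg m f : (forall i, (i < m)%nat -> 0 <= f i) -> 0 <= rsum m f.
Proof.
  induction m; intros H; simpl; [lra|].
  assert (0 <= rsum m f) by (apply IHm; intros; apply H; lia).
  assert (0 <= f m) by (apply H; lia). lra.
Qed.

Lemma rsum_le m f g : (forall i, (i < m)%nat -> f i <= g i) -> rsum m f <= rsum m g.
Proof.
  induction m; intros H; simpl; [lra|].
  assert (rsum m f <= rsum m g) by (apply IHm; intros; apply H; lia).
  assert (f m <= g m) by (apply H; lia). lra.
Qed.

Lemma rsum_ge_term m f j : (forall i, (i < m)%nat -> 0 <= f i) -> (j < m)%nat ->
  f j <= rsum m f.
Proof.
  induction m; intros H Hj; [lia|]. simpl.
  assert (0 <= rsum m f) by (apply rsum_nonneg; intros; apply H; lia).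
  destruct (Nat.eq_dec j m) as [->|Hne]; [lra|].
  assert (f j <= rsum m f) by (apply IHm; [intros; apply H; lia| lia]).
  assert (0 <= f m) by (apply H; lia). lra.
Qed.

Lemma rsum_swap n p (F : nat -> nat -> R) :
  rsum n (fun i => rsum p (fun l => F i l)) = rsum p (fun l => rsum n (fun i => F i l)).
Proof.
  induction n; simpl.
  - rewrite rsum_zero. reflexivity.
  - rewrite IHn. rewrite <- rsum_plus. reflexivity.
Qed.

Lemma rsum_sq_zero m f : rsum m (fun i => f i * f i) = 0 -> forall i, (i < m)%nat -> f i = 0.
Proof.
  intros H i Hi.
  assert (f i * f i <= rsum m (fun i => f i * f i)).
  { apply (rsum_ge_term m (fun i => f i * f i)); [intros; nra|exact Hi]. }
  nra.
Qed.

Ltac fold_rsum :=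
  repeat (rewrite <- rsum_scal || rewrite <- rsum_plus || rewrite <- rsum_minus
          || rewrite <- rsum_opp).

Lemma cs_sq m a b :
  rsum m (fun i => a i * b i) * rsum m (fun i => a i * b i)
  <= rsum m (fun i => a i * a i) * rsum m (fun i => b i * b i).
Proof.
  induction m; simpl; [lra|].
  set (C := rsum m (fun i => a i * b i)) in *.
  set (A := rsum m (fun i => a i * a i)) in *.
  set (B := rsum m (fun i => b i * b i)) in *.
  assert (HA : 0 <= A) by (apply rsum_nonneg; intros; nra).
  assert (HB : 0 <= B) by (apply rsum_nonneg; intros; nra).
  set (x := a m). set (y := b m). clearbody C A B x y.
  assert (2 * C * x * y <= A * y * y + B * x * x).
  { destruct (Req_dec A 0) as [HA0|HA0].
    - assert (HC : C = 0) by nra. rewrite HC, HA0. nra.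
    - assert (A * (A * y * y + B * x * x - 2 * C * x * y) >= 0).
      { assert (A * (A * y * y + B * x * x - 2 * C * x * y)
                = (A * y - C * x) * (A * y - C * x) + (A * B - C * C) * x * x) by ring.
        assert (0 <= (A * B - C * C) * (x * x)) by (apply Rmult_le_pos; nra).
        assert (0 <= (A * y - C * x) * (A * y - C * x)) by apply Rle_0_sqr. nra. }
      nra. }
  nra.
Qed.

Lemma cs m a b :
  rsum m (fun i => a i * b i)
  <= sqrt (rsum m (fun i => a i * a i)) * sqrt (rsum m (fun i => b i * b i)).
Proof.
  rewrite <- sqrt_mult by (apply rsum_nonneg; intros; nra).
  set (C := rsum m (fun i => a i * b i)).
  destruct (Rle_dec C 0); [apply Rle_trans with 0; [lra| apply sqrt_pos]|].
  rewrite <- (sqrt_square C) at 1 by lra.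
  apply sqrt_le_1_alt. apply cs_sq.
Qed.

Lemma dot_ext p u u' v v' : (forall l, (l < p)%nat -> u l = u' l) ->
  (forall l, (l < p)%nat -> v l = v' l) -> dot p u v = dot p u' v'.
Proof. intros. unfold dot. apply rsum_ext. intros. rewrite H, H0 by lia. reflexivity. Qed.

Lemma dot_nonneg p u : 0 <= dot p u u.
Proof. unfold dot. apply rsum_nonneg. intros. nra. Qed.

Lemma dot_sym p u v : dot p u v = dot p v u.
Proof. unfold dot. apply rsum_ext. intros. ring. Qed.

Lemma vnorm_nonneg p u : 0 <= vnorm p u.
Proof. apply sqrt_pos. Qed.

Lemma vnorm_sq p u : vnorm p u * vnorm p u = dot p u u.
Proof. unfold vnorm. apply sqrt_sqrt. apply dot_nonneg. Qed.

Lemma vnorm_pow2 p u : vnorm p u ^ 2 = dot p u u.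
Proof. rewrite <- vnorm_sq. ring. Qed.

Lemma vnorm_ext p u v : (forall l, (l < p)%nat -> u l = v l) -> vnorm p u = vnorm p v.
Proof. intros. unfold vnorm. f_equal. apply dot_ext; auto. Qed.

Lemma dot_cs p u v : dot p u v <= vnorm p u * vnorm p v.
Proof. unfold vnorm, dot. apply cs. Qed.

Lemma dot_cs_abs p u v : Rabs (dot p u v) <= vnorm p u * vnorm p v.
Proof.
  apply Rabs_le. split.
  - assert (dot p (vscal (-1) u) v <= vnorm p (vscal (-1) u) * vnorm p v) by apply dot_cs.
    assert (dot p (vscal (-1) u) v = - dot p u v).
    { unfold dot, vscal. rewrite <- rsum_opp. apply rsum_ext. intros. ring. }
    assert (vnorm p (vscal (-1) u) = vnorm p u).
    { unfold vnorm. f_equal. unfold dot, vscal. apply rsum_ext. intros. ring. }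
    rewrite H0, H1 in H. lra.
  - apply dot_cs.
Qed.

Lemma vnorm_scal p a u : vnorm p (vscal a u) = Rabs a * vnorm p u.
Proof.
  unfold vnorm. rewrite <- (sqrt_square (Rabs a)) by apply Rabs_pos.
  rewrite <- sqrt_mult by (try apply dot_nonneg; nra).
  f_equal. unfold dot, vscal. rewrite <- rsum_scal. apply rsum_ext. intros.
  rewrite <- Rabs_mult, Rabs_right by nra. ring.
Qed.

Lemma vnorm_triangle p u v : vnorm p (vadd u v) <= vnorm p u + vnorm p v.
Proof.
  assert (H1 := vnorm_nonneg p u). assert (H2 := vnorm_nonneg p v).
  assert (H3 := vnorm_nonneg p (vadd u v)).
  apply Rsqr_incr_0_var; [|lra]. unfold Rsqr.
  rewrite vnorm_sq.
  assert (E : dot p (vadd u v) (vadd u v) = dot p u u + 2 * dot p u v + dot p v v).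
  { unfold dot, vadd. fold_rsum. apply rsum_ext. intros. ring. }
  rewrite E. rewrite <- (vnorm_sq p u), <- (vnorm_sq p v).
  assert (dot p u v <= vnorm p u * vnorm p v) by apply dot_cs. nra.
Qed.

Lemma vnorm_sub_triangle p u v w : vnorm p (vsub u w) <= vnorm p (vsub u v) + vnorm p (vsub v w).
Proof.
  replace (vsub u w) with (vadd (vsub u v) (vsub v w)).
  - apply vnorm_triangle.
  - apply functional_extensionality. intros. unfold vadd, vsub. ring.
Qed.

Lemma vnorm_rsum p m (F : nat -> vec) :
  vnorm p (fun l => rsum m (fun i => F i l)) <= rsum m (fun i => vnorm p (F i)).
Proof.
  induction m; simpl.
  - unfold vnorm, dot. simpl. rewrite (rsum_ext p _ (fun _ => 0)) by (intros; ring).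
    rewrite rsum_zero, sqrt_0. lra.
  - eapply Rle_trans; [apply (vnorm_triangle p (fun l => rsum m (fun i => F i l)) (F m))|].
    lra.
Qed.

Lemma vnorm_zero_coord p u : vnorm p u = 0 -> forall l, (l < p)%nat -> u l = 0.
Proof.
  intros H. apply rsum_sq_zero. fold (dot p u u). rewrite <- vnorm_sq, H. ring.
Qed.

Lemma rsum_scal_r m c f : rsum m (fun i => f i * c) = rsum m f * c.
Proof. induction m; simpl; [lra|]. rewrite IHm. lra. Qed.

Lemma descent_step p (F : vec -> R) (G : vec -> vec) mu L x d h j :
  0 <= mu -> strongly_convex p mu F G -> lipschitz_grad p L G -> 0 < h ->
  let z := fun k : nat => fun l => x l + INR k * h * d l in
  F (z (S j)) - F (z j) <= h * dot p (G x) d + h * h * (INR j + 1) * (L * dot p d d).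
Proof.
  intros Hmu Hsc Hlip Hh z.
  assert (H1 := Hsc (z (S j)) (z j)).
  assert (E1 : dot p (G (z (S j))) (vsub (z j) (z (S j))) = - h * dot p (G (z (S j))) d).
  { unfold dot, vsub, z. rewrite <- rsum_scal. apply rsum_ext. intros. rewrite S_INR. ring. }
  assert (Hn : 0 <= mu / 2 * vnorm p (vsub (z j) (z (S j))) ^ 2).
  { apply Rmult_le_pos; [lra|]. rewrite vnorm_pow2. apply dot_nonneg. }
  assert (E2 : dot p (G (z (S j))) d = dot p (G x) d + dot p (vsub (G (z (S j))) (G x)) d).
  { unfold dot, vsub. fold_rsum. apply rsum_ext. intros. ring. }
  assert (H3 : dot p (vsub (G (z (S j))) (G x)) d <= L * vnorm p (vsub (z (S j)) x) * vnorm p d).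
  { eapply Rle_trans; [apply dot_cs|]. apply Rmult_le_compat_r; [apply vnorm_nonneg|]. apply Hlip. }
  assert (E3 : vnorm p (vsub (z (S j)) x) = (INR j + 1) * h * vnorm p d).
  { rewrite (vnorm_ext p _ (vscal ((INR j + 1) * h) d)).
    - rewrite vnorm_scal. rewrite Rabs_right; [reflexivity|].
      assert (0 <= INR j) by apply pos_INR. nra.
    - intros. unfold vsub, vscal, z. rewrite S_INR. ring. }
  rewrite E3 in H3.
  assert (E4 : L * ((INR j + 1) * h * vnorm p d) * vnorm p d = L * (INR j + 1) * h * dot p d d).
  { rewrite <- vnorm_sq. ring. }
  rewrite E4 in H3.
  assert (H5 : h * dot p (G (z (S j))) d <= h * (dot p (G x) d + L * (INR j + 1) * h * dot p d d)).
  { apply Rmult_le_compat_l; lra. }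
  assert (E6 : h * (dot p (G x) d + L * (INR j + 1) * h * dot p d d) =
               h * dot p (G x) d + h * h * (INR j + 1) * (L * dot p d d)) by ring.
  lra.
Qed.

Lemma descent p (F : vec -> R) (G : vec -> vec) mu L :
  0 <= mu -> strongly_convex p mu F G -> lipschitz_grad p L G ->
  forall x d, F (fun l => x l + d l) <= F x + dot p (G x) d + L / 2 * dot p d d.
Proof.
  intros Hmu Hsc Hlip x d.
  set (a := dot p (G x) d). set (b := L * dot p d d).
  assert (Hall : forall N : nat, (0 < N)%nat ->
            F (fun l => x l + d l) - F x <= a + b / 2 + b / (2 * INR N)).
  { intros N HN.
    assert (HNr : 0 < INR N) by (apply lt_0_INR; lia).
    set (h := / INR N).
    assert (Hh : 0 < h) by (apply Rinv_0_lt_compat; lra).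
    set (z := fun k : nat => fun l => x l + INR k * h * d l).
    assert (Hcum : forall j, F (z j) - F x <= INR j * h * a + h * h * b * (INR j * (INR j + 1) / 2)).
    { induction j.
      - assert (z 0%nat = x).
        { apply functional_extensionality. intros. unfold z. simpl. ring. }
        rewrite H. simpl. lra.
      - assert (Hs := descent_step p F G mu L x d h j Hmu Hsc Hlip Hh).
        fold z in Hs. fold a b in Hs. rewrite S_INR.
        assert (E : (INR j + 1) * h * a + h * h * b * ((INR j + 1) * (INR j + 1 + 1) / 2) =
                    (INR j * h * a + h * h * b * (INR j * (INR j + 1) / 2)) +
                    (h * a + h * h * (INR j + 1) * b)) by field.
        rewrite E. lra. }
    assert (Ez : z N = fun l => x l + d l).
    { apply functional_extensionality. intros. unfold z, h. field. lra. }
    assert (H := Hcum N). rewrite Ez in H.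
    assert (E : INR N * h * a + h * h * b * (INR N * (INR N + 1) / 2) = a + b / 2 + b / (2 * INR N)).
    { unfold h. field. lra. }
    lra. }
  set (K := F (fun l => x l + d l) - F x - a - b / 2).
  destruct (Rle_dec K 0) as [HK|HK]; [unfold K, b, a in *; lra|].
  exfalso. apply Rnot_le_lt in HK.
  assert (H1 := Hall 1%nat ltac:(lia)). simpl in H1.
  assert (Hb : 0 < b) by (unfold K in HK; lra).
  destruct (archimed (b / (2 * K))) as [Hup _].
  set (z := up (b / (2 * K))) in *.
  assert (Hz : (0 < z)%Z).
  { apply lt_IZR. eapply Rlt_trans; [|exact Hup]. apply Rdiv_lt_0_compat; lra. }
  set (N := Z.to_nat z).
  assert (HN : INR N = IZR z) by (unfold N; rewrite INR_IZR_INZ; f_equal; lia).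
  assert (H2 := Hall N ltac:(lia)).
  rewrite HN in H2.
  assert (Hzr : 0 < IZR z) by (apply IZR_lt; lia).
  assert (Hb2 : b < K * (2 * IZR z)).
  { assert (E : b = (b / (2 * K)) * (2 * K)) by (field; lra).
    rewrite E at 1. apply (Rmult_lt_compat_r (2 * K)) in Hup; [|lra]. lra. }
  assert (b / (2 * IZR z) < K).
  { apply (Rmult_lt_reg_r (2 * IZR z)); [lra|].
    replace (b / (2 * IZR z) * (2 * IZR z)) with b by (field; lra). lra. }
  unfold K in *. lra.
Qed.

Lemma coco p (F : vec -> R) (G : vec -> vec) mu L :
  0 <= mu <= L -> strongly_convex p mu F G -> lipschitz_grad p L G ->
  forall x y,
  dot p (vsub (G y) (G x)) (vsub (G y) (G x)) + mu * L * dot p (vsub y x) (vsub y x)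
  <= (mu + L) * dot p (vsub (G y) (G x)) (vsub y x).
Proof.
  intros Hmu Hsc Hlip x y.
  set (w := fun l => (G y l - G x l) - mu * (y l - x l)).
  assert (key : forall t, (2 * t - (L - mu) * t * t) * dot p w w <= dot p w (vsub y x)).
  { intros t.
    set (z := fun l => y l - t * w l). set (z' := fun l => x l + t * w l).
    assert (SC1 := Hsc x z). assert (SC2 := Hsc y z').
    assert (DL1 := descent p F G mu L ltac:(lra) Hsc Hlip y (vsub z y)).
    assert (DL2 := descent p F G mu L ltac:(lra) Hsc Hlip x (vsub z' x)).
    assert (Ez : (fun l => y l + vsub z y l) = z).
    { apply functional_extensionality. intros. unfold vsub. ring. }
    assert (Ez' : (fun l => x l + vsub z' x l) = z').
    { apply functional_extensionality. intros. unfold vsub. ring. }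
    rewrite Ez in DL1. rewrite Ez' in DL2.
    rewrite vnorm_pow2 in SC1, SC2.
    assert (ID : (dot p (G x) (vsub z x) + mu / 2 * dot p (vsub z x) (vsub z x))
               - (dot p (G y) (vsub z y) + L / 2 * dot p (vsub z y) (vsub z y))
               + (dot p (G y) (vsub z' y) + mu / 2 * dot p (vsub z' y) (vsub z' y))
               - (dot p (G x) (vsub z' x) + L / 2 * dot p (vsub z' x) (vsub z' x))
               = - dot p w (vsub y x) + (2 * t - (L - mu) * t * t) * dot p w w).
    { unfold dot, vsub, z, z'. fold_rsum. apply rsum_ext. intros. unfold w. field. }
    lra. }
  set (W2 := dot p w w) in *. set (Qm := dot p w (vsub y x)) in *.
  assert (HW2 : 0 <= W2) by apply dot_nonneg.
  assert (Hmain : W2 <= (L - mu) * Qm).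
  { destruct (Rle_lt_or_eq_dec 0 (L - mu) ltac:(lra)) as [HM|HM].
    - assert (H := key (/ (L - mu))).
      assert (E : 2 * / (L - mu) - (L - mu) * / (L - mu) * / (L - mu) = / (L - mu)) by (field; lra).
      rewrite E in H.
      apply (Rmult_le_compat_l (L - mu)) in H; [|lra].
      replace ((L - mu) * (/ (L - mu) * W2)) with W2 in H by (field; lra). exact H.
    - rewrite <- HM. rewrite Rmult_0_l.
      assert (H0 := key 0). 
      destruct (Rle_lt_or_eq_dec 0 W2 HW2) as [Hp|Hz]; [|lra].
      assert (H1 := key ((Qm + 1) / (2 * W2))). rewrite <- HM in H1.
      replace ((2 * ((Qm + 1) / (2 * W2)) - 0 * ((Qm + 1) / (2 * W2)) * ((Qm + 1) / (2 * W2))) * W2)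
        with (Qm + 1) in H1 by (field; lra). lra. }
  assert (E1 : W2 = dot p (vsub (G y) (G x)) (vsub (G y) (G x))
                 - 2 * mu * dot p (vsub (G y) (G x)) (vsub y x)
                 + mu * mu * dot p (vsub y x) (vsub y x)).
  { unfold W2, dot, vsub. fold_rsum. apply rsum_ext. intros. unfold w. ring. }
  assert (E2 : Qm = dot p (vsub (G y) (G x)) (vsub y x) - mu * dot p (vsub y x) (vsub y x)).
  { unfold Qm, dot, vsub. fold_rsum. apply rsum_ext. intros. unfold w. ring. }
  rewrite E1, E2 in Hmain. nra.
Qed.

Lemma contract p (F : vec -> R) (G : vec -> vec) mu L alpha :
  0 <= mu <= L -> 0 < mu + L -> strongly_convex p mu F G -> lipschitz_grad p L G ->
  0 <= alpha -> alpha <= 2 / (mu + L) -> forall x y,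
  dot p (vsub (vsub x (vscal alpha (G x))) (vsub y (vscal alpha (G y))))
        (vsub (vsub x (vscal alpha (G x))) (vsub y (vscal alpha (G y))))
  <= (1 - 2 * alpha * mu * L / (mu + L)) * dot p (vsub x y) (vsub x y).
Proof.
  intros Hmu HmL Hsc Hlip Ha Ha2 x y.
  assert (H := coco p F G mu L Hmu Hsc Hlip y x).
  set (P := dot p (vsub (G x) (G y)) (vsub (G x) (G y))) in *.
  set (Q := dot p (vsub (G x) (G y)) (vsub x y)) in *.
  set (R0 := dot p (vsub x y) (vsub x y)) in *.
  assert (E : dot p (vsub (vsub x (vscal alpha (G x))) (vsub y (vscal alpha (G y))))
        (vsub (vsub x (vscal alpha (G x))) (vsub y (vscal alpha (G y))))
        = R0 - 2 * alpha * Q + alpha * alpha * P).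
  { unfold R0, Q, P, dot, vsub, vscal. fold_rsum. apply rsum_ext. intros. ring. }
  rewrite E.
  assert (HP : 0 <= P) by apply dot_nonneg.
  assert (HR : 0 <= R0) by apply dot_nonneg.
  assert (Hal : alpha * (mu + L) <= 2).
  { apply (Rmult_le_compat_r (mu + L)) in Ha2; [|lra].
    replace (2 / (mu + L) * (mu + L)) with 2 in Ha2 by (field; lra). lra. }
  apply (Rmult_le_reg_l (mu + L)); [lra|].
  replace ((mu + L) * ((1 - 2 * alpha * mu * L / (mu + L)) * R0))
    with ((mu + L) * R0 - 2 * alpha * mu * L * R0) by (field; lra).
  assert (H1 : -2 * alpha * ((mu + L) * Q) <= -2 * alpha * (P + mu * L * R0)).
  { apply Rmult_le_compat_neg_l; lra. }
  assert (H2 : 0 <= alpha * P * (2 - alpha * (mu + L))).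
  { apply Rmult_le_pos; [apply Rmult_le_pos|]; lra. }
  lra.
Qed.

Lemma grad_zero p (F : vec -> R) (G : vec -> vec) mu L xs :
  0 <= mu -> strongly_convex p mu F G -> lipschitz_grad p L G ->
  is_minimizer F xs -> forall l, (l < p)%nat -> G xs l = 0.
Proof.
  intros Hmu Hsc Hlip Hmin.
  set (v := G xs).
  assert (Hv : dot p v v <= 0).
  { set (t := / (2 * (Rabs L + 1))).
    assert (Ht : 0 < t) by (apply Rinv_0_lt_compat; assert (0 <= Rabs L) by apply Rabs_pos; lra).
    assert (HLt : L * t <= / 2).
    { unfold t. assert (L <= Rabs L) by apply RRle_abs.
      apply (Rmult_le_reg_r (2 * (Rabs L + 1))).
      - assert (0 <= Rabs L) by apply Rabs_pos. lra.
      - replace (L * / (2 * (Rabs L + 1)) * (2 * (Rabs L + 1))) with L by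
          (field; assert (0 <= Rabs L) by apply Rabs_pos; lra).
        replace (/ 2 * (2 * (Rabs L + 1))) with (Rabs L + 1) by field. lra. }
    set (z := fun l => xs l - t * v l).
    assert (SC := Hsc z xs).
    assert (Hm := Hmin z).
    rewrite vnorm_pow2 in SC.
    assert (Hn : 0 <= mu / 2 * dot p (vsub xs z) (vsub xs z)).
    { apply Rmult_le_pos; [lra| apply dot_nonneg]. }
    assert (E1 : dot p (G z) (vsub xs z) = t * dot p (G z) v).
    { unfold dot, vsub, z. rewrite <- rsum_scal. apply rsum_ext. intros. ring. }
    assert (H1 : t * dot p (G z) v <= 0) by lra.
    assert (H2 : dot p (G z) v <= 0).
    { apply (Rmult_le_reg_l t); lra. }
    assert (E2 : dot p (G z) v = dot p v v + dot p (vsub (G z) (G xs)) v).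
    { unfold dot, vsub, v. fold_rsum. apply rsum_ext. intros. ring. }
    assert (H3 : - (vnorm p (vsub (G z) (G xs)) * vnorm p v) <= dot p (vsub (G z) (G xs)) v).
    { assert (H := dot_cs_abs p (vsub (G z) (G xs)) v). assert (- dot p (vsub (G z) (G xs)) v <= Rabs (dot p (vsub (G z) (G xs)) v)) by (rewrite <- Rabs_Ropp; apply RRle_abs). lra. }
    assert (H4 : vnorm p (vsub (G z) (G xs)) <= L * (t * vnorm p v)).
    { eapply Rle_trans; [apply Hlip|]. right. f_equal.
      rewrite (vnorm_ext p _ (vscal (- t) v)).
      - rewrite vnorm_scal. rewrite Rabs_Ropp, Rabs_right by lra. reflexivity.
      - intros. unfold vsub, vscal, z. ring. }
    assert (H5 : vnorm p (vsub (G z) (G xs)) * vnorm p v <= L * t * dot p v v).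
    { rewrite <- vnorm_sq. assert (0 <= vnorm p v) by apply vnorm_nonneg.
      apply (Rmult_le_compat_r (vnorm p v)) in H4; [|lra]. nra. }
    assert (Hd := dot_nonneg p v).
    assert (H6 : L * t * dot p v v <= / 2 * dot p v v) by (apply Rmult_le_compat_r; lra).
    lra. }
  assert (Hd := dot_nonneg p v).
  intros l Hl. apply (rsum_sq_zero p v); [|exact Hl]. fold (dot p v v). lra.
Qed.

Lemma mu_le_L p (F : vec -> R) (G : vec -> vec) mu L :
  (0 < p)%nat -> strongly_convex p mu F G -> lipschitz_grad p L G -> mu <= L.
Proof.
  intros Hp Hsc Hlip.
  set (x := fun _ : nat => 0). set (y := fun _ : nat => 1).
  assert (H1 := Hsc x y). assert (H2 := Hsc y x).
  rewrite vnorm_pow2 in H1, H2.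
  assert (E : dot p (vsub x y) (vsub x y) = dot p (vsub y x) (vsub y x)).
  { unfold dot, vsub. apply rsum_ext. intros. ring. }
  rewrite E in H2.
  set (R0 := dot p (vsub y x) (vsub y x)) in *.
  assert (HR : R0 = INR p).
  { unfold R0, dot, vsub, x, y. rewrite (rsum_ext p _ (fun _ => 1)) by (intros; ring).
    rewrite rsum_const. ring. }
  assert (HRp : 0 < R0) by (rewrite HR; apply lt_0_INR; lia).
  assert (E2 : dot p (G x) (vsub y x) + dot p (G y) (vsub x y)
             = - dot p (vsub (G y) (G x)) (vsub y x)).
  { unfold dot, vsub. fold_rsum. apply rsum_ext. intros. ring. }
  assert (H3 : dot p (vsub (G y) (G x)) (vsub y x) <= L * R0).
  { eapply Rle_trans; [apply dot_cs|]. unfold R0. rewrite <- vnorm_sq.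
    assert (0 <= vnorm p (vsub y x)) by apply vnorm_nonneg.
    assert (HH := Hlip y x). apply (Rmult_le_compat_r (vnorm p (vsub y x))) in HH; lra. }
  assert (mu * R0 <= L * R0) by lra.
  apply (Rmult_le_reg_r R0); lra.
Qed.

Lemma mxv_colsum n W u : doubly_stochastic n W ->
  rsum n (fun i => mxv n W u i) = rsum n u.
Proof.
  intros [_ [_ Hc]]. unfold mxv.
  rewrite rsum_swap. apply rsum_ext. intros j Hj.
  rewrite (rsum_ext n _ (fun i => u j * W i j)) by (intros; ring).
  rewrite rsum_scal, Hc by exact Hj. ring.
Qed.

Lemma mxv_const n W c i : doubly_stochastic n W -> (i < n)%nat ->
  mxv n W (fun _ => c) i = c.
Proof.
  intros [_ [Hr _]] Hi. unfold mxv.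
  rewrite (rsum_ext n _ (fun j => c * W i j)) by (intros; ring).
  rewrite rsum_scal, Hr by exact Hi. ring.
Qed.

Lemma mxv_jensen n W u : doubly_stochastic n W ->
  rsum n (fun i => mxv n W u i * mxv n W u i) <= rsum n (fun j => u j * u j).
Proof.
  intros HW. destruct HW as [Hpos [Hr Hc]].
  assert (Hi : forall i, (i < n)%nat ->
    mxv n W u i * mxv n W u i <= rsum n (fun j => W i j * (u j * u j))).
  { intros i Hin.
    assert (H := cs_sq n (fun j => sqrt (W i j)) (fun j => sqrt (W i j) * u j)).
    assert (E1 : rsum n (fun j => sqrt (W i j) * (sqrt (W i j) * u j)) = mxv n W u i).
    { unfold mxv. apply rsum_ext. intros j Hj. rewrite <- Rmult_assoc, sqrt_sqrt by (apply Hpos; lia). ring. }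
    assert (E2 : rsum n (fun j => sqrt (W i j) * sqrt (W i j)) = 1).
    { rewrite <- (Hr i Hin). apply rsum_ext. intros j Hj. apply sqrt_sqrt. apply Hpos; lia. }
    assert (E3 : rsum n (fun j => sqrt (W i j) * u j * (sqrt (W i j) * u j)) = rsum n (fun j => W i j * (u j * u j))).
    { apply rsum_ext. intros j Hj.
      replace (sqrt (W i j) * u j * (sqrt (W i j) * u j)) with ((sqrt (W i j) * sqrt (W i j)) * (u j * u j)) by ring.
      rewrite sqrt_sqrt by (apply Hpos; lia). ring. }
    cbv beta in H. rewrite E1, E2, E3 in H. lra. }
  eapply Rle_trans; [apply rsum_le; exact Hi|].
  rewrite rsum_swap. right. apply rsum_ext. intros j Hj.
  rewrite (rsum_ext n _ (fun i => (u j * u j) * W i j)) by (intros; ring).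
  rewrite rsum_scal, Hc by exact Hj. ring.
Qed.

Lemma quad_zero a b : (forall t, 2 * t * a + t * t * b <= 0) -> a = 0.
Proof.
  intros H.
  assert (Hb : 0 <= Rabs b) by apply Rabs_pos.
  assert (Hbb : b <= Rabs b) by apply RRle_abs.
  assert (Hbb' : - b <= Rabs b) by (rewrite <- Rabs_Ropp; apply RRle_abs).
  destruct (Rtotal_order a 0) as [Ha|[Ha|Ha]]; [|exact Ha|].
  - set (t := a / (Rabs b + 1)).
    assert (Ht : t < 0) by (unfold t; apply Rdiv_neg_pos; lra).
    assert (H1 := H t).
    assert (E : t * Rabs b = a - t) by (unfold t; field; lra).
    assert (H2 : 0 <= 2 * a + t * b).
    { apply (Rmult_le_reg_l (-t)); [lra|]. rewrite Rmult_0_r.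
      replace ((-t) * (2 * a + t * b)) with (-(2 * t * a + t * t * b)) by ring. lra. }
    assert (H3 : (-t) * (-b) <= (-t) * Rabs b) by (apply Rmult_le_compat_l; lra).
    lra.
  - set (t := a / (Rabs b + 1)).
    assert (Ht : 0 < t) by (unfold t; apply Rdiv_lt_0_compat; lra).
    assert (H1 := H t).
    assert (E : t * Rabs b = a - t) by (unfold t; field; lra).
    assert (H2 : 2 * a + t * b <= 0).
    { apply (Rmult_le_reg_l t); [lra|]. rewrite Rmult_0_r.
      replace (t * (2 * a + t * b)) with (2 * t * a + t * t * b) by ring. lra. }
    assert (H3 : t * (-b) <= t * Rabs b) by (apply Rmult_le_compat_l; lra).
    lra.
Qed.

Lemma spectral_bound n W beta : (0 < n)%nat -> symmetric_mx n W ->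
  doubly_stochastic n W -> simple_eig_one n W -> is_slem n W beta ->
  forall u, rsum n u = 0 ->
  rsum n (fun i => mxv n W u i * mxv n W u i) <= beta * beta * rsum n (fun j => u j * u j).
Proof.
  intros Hn Hsym HW Hsimple Hslem.
  destruct n as [|m]; [lia|].
  destruct (evt_sphere m (fun i j => W i j - / INR (S m))) as [u0 [Hu0 Hmax]].
  set (n := S m) in *.
  assert (HnR : 0 < INR n) by (apply lt_0_INR; unfold n; lia).
  set (B := fun i j => W i j - / INR n) in *.
  set (Bv := fun v i => rsum n (fun j => B i j * v j)).
  assert (HQ : forall v, Qf n B v = rsum n (fun i => Bv v i * Bv v i)) by reflexivity.
  assert (HBsym : forall i j, (i < n)%nat -> (j < n)%nat -> B i j = B j i).
  { intros. unfold B. rewrite Hsym by assumption. reflexivity. }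
  assert (HBcol : forall k, (k < n)%nat -> rsum n (fun j => B j k) = 0).
  { intros k Hk. unfold B. rewrite rsum_minus, rsum_const.
    destruct HW as [_ [_ Hc]]. rewrite Hc by exact Hk. field. lra. }
  assert (HBmxv : forall v i, Bv v i = mxv n W v i - / INR n * rsum n v).
  { intros v i. unfold Bv, B, mxv. rewrite <- rsum_scal. rewrite <- rsum_minus.
    apply rsum_ext. intros. ring. }
  assert (HBlin : forall v w a i, Bv (fun j => v j + a * w j) i = Bv v i + a * Bv w i).
  { intros. unfold Bv. rewrite <- rsum_scal, <- rsum_plus. apply rsum_ext. intros. ring. }
  assert (Hswap : forall x v, rsum n (fun i => x i * Bv v i) = rsum n (fun j => v j * Bv x j)).
  { intros x v. unfold Bv.
    rewrite (rsum_ext n _ (fun i => rsum n (fun j => x i * B i j * v j)))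
      by (intros; rewrite <- rsum_scal; apply rsum_ext; intros; ring).
    rewrite rsum_swap. apply rsum_ext. intros j Hj.
    rewrite <- rsum_scal. apply rsum_ext. intros i Hi. rewrite (HBsym i j) by assumption. ring. }
  set (s := Qf n B u0).
  assert (Hs0 : 0 <= s).
  { unfold s. rewrite HQ. apply rsum_nonneg. intros. apply Rle_0_sqr. }
  assert (HNf0 : forall v, 0 <= Nf n v) by (intros; apply rsum_nonneg; intros; apply Rle_0_sqr).
  assert (Hhom : forall v, Qf n B v <= s * Nf n v).
  { intros v. destruct (Rle_lt_or_eq_dec 0 (Nf n v) (HNf0 v)) as [Hp|Hz].
    - set (c := / sqrt (Nf n v)).
      assert (Hsq : 0 < sqrt (Nf n v)) by (apply sqrt_lt_R0; exact Hp).
      assert (Hcc : c * c * Nf n v = 1).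
      { unfold c. rewrite <- Rinv_mult, sqrt_sqrt by lra. field. lra. }
      assert (E1 : Nf n (fun j => c * v j) = c * c * Nf n v).
      { unfold Nf. rewrite <- rsum_scal. apply rsum_ext. intros. ring. }
      assert (E2 : Qf n B (fun j => c * v j) = c * c * Qf n B v).
      { rewrite !HQ. rewrite <- rsum_scal. apply rsum_ext. intros i _.
        assert (Bv (fun j => c * v j) i = c * Bv v i).
        { unfold Bv. rewrite <- rsum_scal. apply rsum_ext. intros. ring. }
        rewrite H. ring. }
      assert (H := Hmax (fun j => c * v j) ltac:(rewrite E1; exact Hcc)).
      rewrite E2 in H. fold s in H.
      apply (Rmult_le_compat_r (Nf n v)) in H; [|lra].
      replace (c * c * Qf n B v * Nf n v) with (Qf n B v * (c * c * Nf n v)) in H by ring.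
      rewrite Hcc in H. lra.
    - assert (Hz0 : forall j, (j < n)%nat -> v j = 0) by (apply rsum_sq_zero; symmetry; exact Hz).
      rewrite HQ. rewrite (rsum_ext n _ (fun _ => 0)).
      + rewrite rsum_zero, <- Hz. lra.
      + intros i _. assert (Bv v i = 0).
        { unfold Bv. rewrite (rsum_ext n _ (fun _ => 0)); [apply rsum_zero|].
          intros j Hj. rewrite Hz0 by exact Hj. ring. }
        rewrite H. ring. }
  assert (Hpert : forall v, rsum n (fun i => Bv u0 i * Bv v i) = s * rsum n (fun j => u0 j * v j)).
  { intros v.
    assert (Hq : forall t, 2 * t * (rsum n (fun i => Bv u0 i * Bv v i) - s * rsum n (fun j => u0 j * v j))
                       + t * t * (Qf n B v - s * Nf n v) <= 0).
    { intros t. assert (H := Hhom (fun j => u0 j + t * v j)).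
      assert (E1 : Qf n B (fun j => u0 j + t * v j) =
                   s + 2 * t * rsum n (fun i => Bv u0 i * Bv v i) + t * t * Qf n B v).
      { unfold s. rewrite !HQ.
        rewrite (rsum_ext n (fun i => Bv (fun j => u0 j + t * v j) i * Bv (fun j => u0 j + t * v j) i)
                   (fun i => (Bv u0 i + t * Bv v i) * (Bv u0 i + t * Bv v i)))
          by (intros; rewrite HBlin; reflexivity).
        fold_rsum. apply rsum_ext. intros. ring. }
      assert (E2 : Nf n (fun j => u0 j + t * v j) = 1 + 2 * t * rsum n (fun j => u0 j * v j) + t * t * Nf n v).
      { rewrite <- Hu0. unfold Nf. fold_rsum. apply rsum_ext. intros. ring. }
      rewrite E1, E2 in H.
      replace (s * (1 + 2 * t * rsum n (fun j => u0 j * v j) + t * t * Nf n v))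
        with (s + 2 * t * (s * rsum n (fun j => u0 j * v j)) + t * t * (s * Nf n v)) in H by ring.
      lra. }
    assert (H := quad_zero _ _ Hq). lra. }
  assert (HBB : forall j, (j < n)%nat -> Bv (Bv u0) j = s * u0 j).
  { set (r := fun j => Bv (Bv u0) j - s * u0 j).
    assert (H := Hpert r). rewrite Hswap in H.
    assert (Hr : rsum n (fun j => r j * r j) = 0).
    { rewrite (rsum_ext n (fun j => r j * r j) (fun j => r j * Bv (Bv u0) j - s * (u0 j * r j)))
        by (intros; unfold r at 2; ring).
      rewrite rsum_minus, rsum_scal. lra. }
    intros j Hj. assert (H0 := rsum_sq_zero n r Hr j Hj). unfold r in H0. lra. }
  set (sg := sqrt s).
  assert (Hsg : sg * sg = s) by (unfold sg; apply sqrt_sqrt; exact Hs0).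
  set (w := fun j => Bv u0 j - sg * u0 j).
  assert (Hw : forall j, (j < n)%nat -> Bv w j = - sg * w j).
  { intros j Hj. unfold w.
    replace (fun j0 => Bv u0 j0 - sg * u0 j0) with (fun j0 => Bv u0 j0 + (- sg) * u0 j0)
      by (apply functional_extensionality; intros; ring).
    rewrite HBlin, HBB by exact Hj. rewrite <- Hsg. ring. }
  assert (Hex : exists lam z, lam * lam = s /\ (exists j, (j < n)%nat /\ z j <> 0) /\
                  forall j, (j < n)%nat -> Bv z j = lam * z j).
  { destruct (classic (exists j, (j < n)%nat /\ w j <> 0)) as [Hy|Hno].
    - exists (- sg), w. split; [rewrite <- Hsg; ring|]. split; [exact Hy| exact Hw].
    - exists sg, u0. split; [exact Hsg|]. split.
      + apply NNPP. intros Hc.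
        assert (Nf n u0 = 0).
        { unfold Nf. rewrite (rsum_ext n _ (fun _ => 0)); [apply rsum_zero|].
          intros j Hj. assert (u0 j = 0).
          { apply NNPP. intros Hne. apply Hc. exists j. auto. }
          rewrite H. ring. }
        lra.
      + intros j Hj. apply NNPP. intros Hne. apply Hno. exists j. split; [exact Hj|].
        unfold w. intros He. apply Hne. lra. }
  assert (Hsb : s <= beta * beta).
  { destruct Hex as [lam [z [Hlam [[j0 [Hj0 Hz0]] Hz]]]].
    destruct (Req_dec lam 0) as [Hl0|Hl0].
    - rewrite <- Hlam, Hl0. nra.
    - assert (Hsum : rsum n z = 0).
      { assert (E : lam * rsum n z = rsum n (fun j => Bv z j)).
        { rewrite <- rsum_scal. apply rsum_ext. intros. rewrite Hz by assumption. reflexivity. }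
        assert (E2 : rsum n (fun j => Bv z j) = 0).
        { unfold Bv. rewrite rsum_swap.
          rewrite (rsum_ext n _ (fun k => z k * rsum n (fun j => B j k))).
          - rewrite (rsum_ext n _ (fun _ => 0)); [apply rsum_zero|].
            intros k Hk. rewrite HBcol by exact Hk. ring.
          - intros. rewrite <- rsum_scal. apply rsum_ext. intros. ring. }
        rewrite E2 in E. apply Rmult_integral in E. destruct E; [contradiction|assumption]. }
      assert (Heig : forall i, (i < n)%nat -> mxv n W z i = lam * z i).
      { intros i Hi. rewrite <- Hz by exact Hi. rewrite HBmxv, Hsum. ring. }
      assert (Hl1 : lam <> 1).
      { intros Hl. destruct Hsimple as [_ Hs1].
        assert (Hc : forall i, (i < n)%nat -> z i = z 0%nat).
        { intros i Hi. apply Hs1; [|exact Hi|unfold n; lia].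
          intros k Hk. rewrite Heig by exact Hk. rewrite Hl. ring. }
        rewrite (rsum_ext n _ (fun _ => z 0%nat)) in Hsum by exact Hc.
        rewrite rsum_const in Hsum.
        assert (z 0%nat = 0) by (apply Rmult_integral in Hsum; destruct Hsum; [lra|assumption]).
        apply Hz0. rewrite Hc by exact Hj0. assumption. }
      destruct Hslem as [_ Hsl].
      assert (Ha : Rabs lam <= beta).
      { apply Hsl; [|exact Hl1]. exists z. split; [exists j0; auto| exact Heig]. }
      rewrite <- Hlam.
      assert (0 <= Rabs lam) by apply Rabs_pos.
      assert (El : lam * lam = Rabs lam * Rabs lam).
      { rewrite <- Rabs_mult. rewrite Rabs_right; [reflexivity|]. apply Rle_ge, Rle_0_sqr. }
      rewrite El. apply Rmult_le_compat; lra. }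
  intros u Hu.
  assert (E : rsum n (fun i => mxv n W u i * mxv n W u i) = Qf n B u).
  { rewrite HQ. apply rsum_ext. intros i _. rewrite HBmxv, Hu. ring. }
  rewrite E. eapply Rle_trans; [apply Hhom|].
  apply Rmult_le_compat_r; [apply HNf0|exact Hsb].
Qed.

Definition ssq n p (y : svec) : R := rsum n (fun i => dot p (y i) (y i)).

Lemma ssq_nonneg n p y : 0 <= ssq n p y.
Proof. apply rsum_nonneg. intros. apply dot_nonneg. Qed.

Lemma snorm_ssq n p y : snorm n p y = sqrt (ssq n p y).
Proof. reflexivity. Qed.

Lemma ssq_ext n p y z : (forall i l, (i < n)%nat -> (l < p)%nat -> y i l = z i l) ->
  ssq n p y = ssq n p z.
Proof. intros H. apply rsum_ext. intros i Hi. apply dot_ext; intros; apply H; auto. Qed.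

Lemma ssq_swap n p y : ssq n p y = rsum p (fun l => rsum n (fun i => y i l * y i l)).
Proof. unfold ssq, dot. apply rsum_swap. Qed.

Lemma ssq_Zmul_le n p W y : doubly_stochastic n W -> ssq n p (Zmul n W y) <= ssq n p y.
Proof.
  intros HW. rewrite !ssq_swap. apply rsum_le. intros l Hl.
  apply (mxv_jensen n W (fun j => y j l) HW).
Qed.

Lemma ssq_Zmul_contr n p W beta y : (0 < n)%nat -> symmetric_mx n W ->
  doubly_stochastic n W -> simple_eig_one n W -> is_slem n W beta ->
  (forall l, (l < p)%nat -> rsum n (fun j => y j l) = 0) ->
  ssq n p (Zmul n W y) <= beta * beta * ssq n p y.
Proof.
  intros Hn Hs HW Hsi Hsl Hc. rewrite !ssq_swap. rewrite <- rsum_scal.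
  apply rsum_le. intros l Hl.
  apply (spectral_bound n W beta Hn Hs HW Hsi Hsl (fun j => y j l) (Hc l Hl)).
Qed.

Lemma colsum_Zmul n W y l : doubly_stochastic n W ->
  rsum n (fun i => Zmul n W y i l) = rsum n (fun j => y j l).
Proof. intros HW. apply (mxv_colsum n W (fun j => y j l) HW). Qed.

Lemma colsum_Zpow n W k y l : doubly_stochastic n W ->
  rsum n (fun i => Zpow n W k y i l) = rsum n (fun j => y j l).
Proof.
  intros HW. induction k; simpl; [reflexivity|]. rewrite colsum_Zmul by exact HW. exact IHk.
Qed.

Lemma ssq_Zpow_le n p W k y : doubly_stochastic n W -> ssq n p (Zpow n W k y) <= ssq n p y.
Proof.
  intros HW. induction k; simpl; [lra|].
  eapply Rle_trans; [apply ssq_Zmul_le; exact HW| exact IHk].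
Qed.

Lemma ssq_Zpow_contr n p W beta k y : (0 < n)%nat -> symmetric_mx n W ->
  doubly_stochastic n W -> simple_eig_one n W -> is_slem n W beta ->
  (forall l, (l < p)%nat -> rsum n (fun j => y j l) = 0) ->
  ssq n p (Zpow n W k y) <= (beta * beta) ^ k * ssq n p y.
Proof.
  intros Hn Hs HW Hsi Hsl Hc. induction k; simpl; [lra|].
  eapply Rle_trans.
  - apply (ssq_Zmul_contr n p W beta); auto.
    intros l Hl. rewrite colsum_Zpow by exact HW. apply Hc; exact Hl.
  - assert (0 <= beta * beta) by nra. 
    apply Rle_trans with (beta * beta * ((beta * beta) ^ k * ssq n p y)); [apply Rmult_le_compat_l; assumption| right; ring].
Qed.

Lemma Zmul_ext n W y z i l : (forall j, (j < n)%nat -> y j l = z j l) ->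
  Zmul n W y i l = Zmul n W z i l.
Proof. intros H. unfold Zmul. apply rsum_ext. intros j Hj. rewrite H by exact Hj. reflexivity. Qed.

Lemma Zmul_shift n W y c i l : doubly_stochastic n W -> (i < n)%nat ->
  Zmul n W (fun j l => y j l - c l) i l = Zmul n W y i l - c l.
Proof.
  intros [_ [Hr _]] Hi. unfold Zmul.
  rewrite (rsum_ext n _ (fun j => W i j * y j l - c l * W i j)) by (intros; ring).
  rewrite rsum_minus, rsum_scal, Hr by exact Hi. ring.
Qed.

Lemma Zpow_shift n W k y c i l : doubly_stochastic n W -> (i < n)%nat ->
  Zpow n W k (fun j l => y j l - c l) i l = Zpow n W k y i l - c l.
Proof.
  intros HW. revert i l. induction k; intros i l Hi; simpl; [reflexivity|].
  rewrite (Zmul_ext n W _ (fun j l => Zpow n W k y j l - c l)) by (intros; apply IHk; assumption).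
  apply Zmul_shift; assumption.
Qed.

Lemma avg_Zpow n W k y l : doubly_stochastic n W -> avg n (Zpow n W k y) l = avg n y l.
Proof. intros HW. unfold avg. rewrite colsum_Zpow by exact HW. reflexivity. Qed.

Lemma ssq_center n p y : (0 < n)%nat ->
  ssq n p (fun i l => y i l - avg n y l) <= ssq n p y.
Proof.
  intros Hn. assert (HnR : 0 < INR n) by (apply lt_0_INR; lia).
  rewrite !ssq_swap. apply rsum_le. intros l Hl.
  set (m := avg n y l).
  assert (Hm : rsum n (fun i => y i l) = INR n * m) by (unfold m, avg; field; lra).
  rewrite (rsum_ext n _ (fun i => y i l * y i l - 2 * m * y i l + m * m)) by (intros; ring).
  rewrite rsum_plus, rsum_minus, rsum_scal, rsum_const, Hm.
  assert (0 <= INR n * (m * m)) by (apply Rmult_le_pos; [lra|apply Rle_0_sqr]).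
  lra.
Qed.

Lemma snorm_triangle n p a b :
  snorm n p (fun i => vadd (a i) (b i)) <= snorm n p a + snorm n p b.
Proof.
  rewrite !snorm_ssq.
  assert (Ha := ssq_nonneg n p a). assert (Hb := ssq_nonneg n p b).
  assert (Hab := ssq_nonneg n p (fun i => vadd (a i) (b i))).
  assert (H1 := sqrt_pos (ssq n p a)). assert (H2 := sqrt_pos (ssq n p b)).
  apply Rsqr_incr_0_var; [|lra]. unfold Rsqr. rewrite sqrt_sqrt by exact Hab.
  assert (Hle : ssq n p (fun i => vadd (a i) (b i)) <=
      rsum n (fun i => (vnorm p (a i) + vnorm p (b i)) * (vnorm p (a i) + vnorm p (b i)))).
  { apply rsum_le. intros i Hi. rewrite <- vnorm_sq.
    assert (T := vnorm_triangle p (a i) (b i)). assert (T0 := vnorm_nonneg p (vadd (a i) (b i))).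
    apply Rmult_le_compat; lra. }
  assert (E : rsum n (fun i => (vnorm p (a i) + vnorm p (b i)) * (vnorm p (a i) + vnorm p (b i)))
     = ssq n p a + 2 * rsum n (fun i => vnorm p (a i) * vnorm p (b i)) + ssq n p b).
  { unfold ssq. rewrite (rsum_ext n (fun i => dot p (a i) (a i)) (fun i => vnorm p (a i) * vnorm p (a i)))
      by (intros; rewrite vnorm_sq; reflexivity).
    rewrite (rsum_ext n (fun i => dot p (b i) (b i)) (fun i => vnorm p (b i) * vnorm p (b i)))
      by (intros; rewrite vnorm_sq; reflexivity).
    fold_rsum. apply rsum_ext. intros. ring. }
  assert (Hcs := cs n (fun i => vnorm p (a i)) (fun i => vnorm p (b i))). cbv beta in Hcs.
  assert (E2 : rsum n (fun i => vnorm p (a i) * vnorm p (a i)) = ssq n p a).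
  { unfold ssq. apply rsum_ext. intros. apply vnorm_sq. }
  assert (E3 : rsum n (fun i => vnorm p (b i) * vnorm p (b i)) = ssq n p b).
  { unfold ssq. apply rsum_ext. intros. apply vnorm_sq. }
  rewrite E2, E3 in Hcs.
  assert (S1 := sqrt_sqrt _ Ha). assert (S2 := sqrt_sqrt _ Hb).
  nra.
Qed.

Lemma term_le_snorm n p y i : (i < n)%nat -> vnorm p (y i) <= snorm n p y.
Proof.
  intros Hi. unfold vnorm. rewrite snorm_ssq. apply sqrt_le_1_alt.
  apply (rsum_ge_term n (fun i => dot p (y i) (y i))); [intros; apply dot_nonneg| exact Hi].
Qed.

Lemma max_upto_ge n f i : (i < n)%nat -> f i <= max_upto n f.
Proof.
  induction n as [|n IH]; intros Hi; [lia|].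
  destruct n as [|n].
  - assert (i = 0%nat) by lia. subst. simpl. lra.
  - change (max_upto (S (S n)) f) with (Rmax (max_upto (S n) f) (f (S n))).
    destruct (Nat.eq_dec i (S n)) as [->|Hne]; [apply Rmax_r|].
    eapply Rle_trans; [apply IH; lia| apply Rmax_l].
Qed.

Lemma min_upto_le n f i : (i < n)%nat -> min_upto n f <= f i.
Proof.
  induction n as [|n IH]; intros Hi; [lia|].
  destruct n as [|n].
  - assert (i = 0%nat) by lia. subst. simpl. lra.
  - change (min_upto (S (S n)) f) with (Rmin (min_upto (S n) f) (f (S n))).
    destruct (Nat.eq_dec i (S n)) as [->|Hne]; [apply Rmin_r|].
    eapply Rle_trans; [apply Rmin_l| apply IH; lia].
Qed.

Lemma min_upto_pos n f : (0 < n)%nat -> (forall i, (i < n)%nat -> 0 < f i) -> 0 < min_upto n f.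
Proof.
  induction n as [|n IH]; intros Hn H; [lia|].
  destruct n as [|n].
  - simpl. apply H. lia.
  - change (min_upto (S (S n)) f) with (Rmin (min_upto (S n) f) (f (S n))).
    apply Rmin_glb_lt; [apply IH; [lia| intros; apply H; lia]| apply H; lia].
Qed.

Definition hbar n (f : nat -> vec -> R) (x : vec) : R := / INR n * rsum n (fun i => f i x).
Definition Gbar n (g : nat -> vec -> vec) (x : vec) : vec := fun l => / INR n * rsum n (fun i => g i x l).

Lemma hbar_sc n p f g mu : (0 < n)%nat ->
  (forall i, (i < n)%nat -> strongly_convex p (mu i) (f i) (g i)) ->
  strongly_convex p (/ INR n * rsum n mu) (hbar n f) (Gbar n g).
Proof.
  intros Hn Hsc x y. unfold hbar.
  assert (HnR : 0 < / INR n) by (apply Rinv_0_lt_compat, lt_0_INR; lia).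
  set (V := vnorm p (vsub y x) ^ 2).
  assert (H : rsum n (fun i => f i x + dot p (g i x) (vsub y x) + mu i / 2 * V) <= rsum n (fun i => f i y)).
  { apply rsum_le. intros i Hi. assert (HH := Hsc i Hi x y). fold V in HH. lra. }
  assert (E1 : rsum n (fun i => f i x + dot p (g i x) (vsub y x) + mu i / 2 * V)
          = rsum n (fun i => f i x) + rsum n (fun i => dot p (g i x) (vsub y x)) + V / 2 * rsum n mu).
  { rewrite <- rsum_scal, <- !rsum_plus. apply rsum_ext. intros. field. }
  assert (E2 : dot p (Gbar n g x) (vsub y x) = / INR n * rsum n (fun i => dot p (g i x) (vsub y x))).
  { unfold dot, Gbar. rewrite rsum_swap. rewrite <- rsum_scal. apply rsum_ext. intros.
    rewrite <- !rsum_scal. rewrite <- rsum_scal_r. apply rsum_ext. intros. ring. }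
  rewrite E2. rewrite E1 in H.
  apply (Rmult_le_compat_l (/ INR n)) in H; [|lra].
  apply Rle_ge. eapply Rle_trans; [|exact H]. right. field. apply not_0_INR. lia.
Qed.

Lemma Gbar_lip n p g Lf : (0 < n)%nat ->
  (forall i, (i < n)%nat -> lipschitz_grad p (Lf i) (g i)) ->
  lipschitz_grad p (/ INR n * rsum n Lf) (Gbar n g).
Proof.
  intros Hn Hl x y.
  assert (HnR : 0 < / INR n) by (apply Rinv_0_lt_compat, lt_0_INR; lia).
  rewrite (vnorm_ext p _ (vscal (/ INR n) (fun l => rsum n (fun i => vsub (g i x) (g i y) l)))).
  - rewrite vnorm_scal, Rabs_right by lra. rewrite Rmult_assoc.
    apply Rmult_le_compat_l; [lra|].
    eapply Rle_trans; [apply vnorm_rsum|].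
    rewrite Rmult_comm, <- rsum_scal. apply rsum_le. intros i Hi.
    rewrite Rmult_comm. apply Hl. exact Hi.
  - intros l Hl'. unfold vsub, vscal, Gbar. rewrite rsum_minus. ring.
Qed.

Lemma hbar_min n f xs : (0 < n)%nat ->
  is_minimizer (fun x => rsum n (fun i => f i x)) xs -> is_minimizer (hbar n f) xs.
Proof.
  intros Hn H y. unfold hbar. apply Rmult_le_compat_l.
  - left. apply Rinv_0_lt_compat, lt_0_INR. lia.
  - apply H.
Qed.

Lemma vnorm_vsub_sym p u v : vnorm p (vsub u v) = vnorm p (vsub v u).
Proof. unfold vnorm, dot, vsub. f_equal. apply rsum_ext. intros. ring. Qed.

Lemma snorm_sub_le n p a b : snorm n p (fun i => vsub (a i) (b i)) <= snorm n p a + snorm n p b.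
Proof.
  assert (E : (fun i => vsub (a i) (b i)) = (fun i => vadd (a i) (vscal (-1) (b i)))).
  { apply functional_extensionality. intros i. apply functional_extensionality. intros l.
    unfold vsub, vadd, vscal. ring. }
  rewrite E. eapply Rle_trans; [apply snorm_triangle|].
  assert (E2 : snorm n p (fun i => vscal (-1) (b i)) = snorm n p b).
  { rewrite !snorm_ssq. f_equal. unfold ssq, dot, vscal. apply rsum_ext. intros.
    apply rsum_ext. intros. ring. }
  lra.
Qed.

Lemma snorm_add_le n p a b : snorm n p a <= snorm n p (fun i => vsub (a i) (b i)) + snorm n p b.
Proof.
  assert (E : a = (fun i => vadd (vsub (a i) (b i)) (b i))).
  { apply functional_extensionality. intros i. apply functional_extensionality. intros l.
    unfold vsub, vadd. ring. }
  rewrite E at 1. apply snorm_triangle.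
Qed.

Lemma snorm_nonneg n p y : 0 <= snorm n p y.
Proof. apply sqrt_pos. Qed.

Lemma sqrt_1m_le v : 0 <= v <= 1 -> sqrt (1 - v) <= 1 - v / 2.
Proof.
  intros Hv. rewrite <- (sqrt_square (1 - v / 2)) by lra.
  apply sqrt_le_1_alt. nra.
Qed.

Lemma bounded_iter n p W g alpha s0 ustar nu :
  doubly_stochastic n W -> 0 < nu <= 1 ->
  (forall i x, (i < n)%nat ->
     dot p (vsub (vsub x (vscal alpha (g i x))) (ustar i)) (vsub (vsub x (vscal alpha (g i x))) (ustar i))
     <= (1 - nu) * dot p (vsub x (ustar i)) (vsub x (ustar i))) ->
  forall k, snorm n p (near_dgd_y n W g alpha s0 k)
     <= snorm n p (fun i => vsub s0 (ustar i)) + (nu + 4) / nu * snorm n p ustar.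
Proof.
  intros HW Hnu Hloc.
  set (U := snorm n p ustar). set (e0 := snorm n p (fun i => vsub s0 (ustar i))).
  set (e := fun k => snorm n p (fun i => vsub (near_dgd_y n W g alpha s0 k i) (ustar i))).
  assert (HU : 0 <= U) by apply snorm_nonneg.
  assert (He0 : 0 <= e0) by apply snorm_nonneg.
  assert (Hyk : forall k, snorm n p (near_dgd_y n W g alpha s0 k) <= e k + U).
  { intros k. apply snorm_add_le. }
  assert (Hrec : forall k, e (S k) <= (1 - nu / 2) * (e k + 2 * U)).
  { intros k. set (x := near_dgd_x n W g alpha s0 k).
    assert (E : e (S k) = sqrt (ssq n p (fun i => vsub (vsub (x i) (vscal alpha (g i (x i)))) (ustar i)))) by reflexivity.
    assert (H1 : ssq n p (fun i => vsub (vsub (x i) (vscal alpha (g i (x i)))) (ustar i))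
                 <= (1 - nu) * ssq n p (fun i => vsub (x i) (ustar i))).
    { unfold ssq. rewrite <- rsum_scal. apply rsum_le. intros i Hi. apply Hloc. exact Hi. }
    assert (H2 : e (S k) <= sqrt (1 - nu) * snorm n p (fun i => vsub (x i) (ustar i))).
    { rewrite E, snorm_ssq, <- sqrt_mult by (try apply ssq_nonneg; lra).
      apply sqrt_le_1_alt. exact H1. }
    assert (H3 : snorm n p (fun i => vsub (x i) (ustar i)) <= snorm n p x + U) by apply snorm_sub_le.
    assert (H4 : snorm n p x <= snorm n p (near_dgd_y n W g alpha s0 k)).
    { unfold x, near_dgd_x. rewrite !snorm_ssq. apply sqrt_le_1_alt. apply ssq_Zpow_le. exact HW. }
    assert (H5 := Hyk k).
    assert (Hq := sqrt_1m_le nu ltac:(lra)). assert (Hq0 := sqrt_pos (1 - nu)).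
    assert (Hek : 0 <= e k) by apply snorm_nonneg.
    assert (Hs0 : 0 <= snorm n p (fun i => vsub (x i) (ustar i))) by apply snorm_nonneg.
    assert (H6 : snorm n p (fun i => vsub (x i) (ustar i)) <= e k + 2 * U) by lra.
    eapply Rle_trans; [exact H2|]. apply Rmult_le_compat; lra. }
  assert (Hb : forall k, e k <= e0 + 4 * U / nu).
  { induction k.
    - assert (e 0%nat = e0) by reflexivity. 
      assert (0 <= 4 * U / nu) by (apply Rmult_le_pos; [lra| left; apply Rinv_0_lt_compat; lra]). lra.
    - eapply Rle_trans; [apply Hrec|].
      assert (Hek : 0 <= e k) by apply snorm_nonneg.
      apply Rle_trans with ((1 - nu / 2) * (e0 + 4 * U / nu + 2 * U)).
      + apply Rmult_le_compat_l; lra.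
      + assert (E : (1 - nu / 2) * (e0 + 4 * U / nu + 2 * U) = e0 + 4 * U / nu - nu / 2 * e0 - nu * U)
          by (field; lra).
        rewrite E. assert (0 <= nu / 2 * e0) by (apply Rmult_le_pos; lra).
        assert (0 <= nu * U) by (apply Rmult_le_pos; lra). lra. }
  intros k. eapply Rle_trans; [apply Hyk|].
  assert (E : (nu + 4) / nu * U = U + 4 * U / nu) by (field; lra).
  rewrite E. assert (H := Hb k). unfold e0 in *. lra.
Qed.

Lemma consensus n p W beta y k : (0 < n)%nat -> symmetric_mx n W ->
  doubly_stochastic n W -> simple_eig_one n W -> is_slem n W beta -> 0 <= beta ->
  snorm n p (fun i => vsub (Zpow n W k y i) (avg n (Zpow n W k y))) <= beta ^ k * snorm n p y.
Proof.
  intros Hn Hs HW Hsi Hsl Hb.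
  set (c := avg n y).
  assert (HnR : 0 < INR n) by (apply lt_0_INR; lia).
  assert (E : ssq n p (fun i => vsub (Zpow n W k y i) (avg n (Zpow n W k y)))
            = ssq n p (Zpow n W k (fun j l => y j l - c l))).
  { apply ssq_ext. intros i l Hi Hl. unfold vsub. rewrite avg_Zpow by exact HW.
    rewrite Zpow_shift by assumption. reflexivity. }
  assert (H1 : ssq n p (Zpow n W k (fun j l => y j l - c l)) <= (beta * beta) ^ k * ssq n p (fun j l => y j l - c l)).
  { apply ssq_Zpow_contr; auto. intros l Hl. rewrite rsum_minus, rsum_const. unfold c, avg. field. lra. }
  assert (H2 : ssq n p (fun j l => y j l - c l) <= ssq n p y) by (apply ssq_center; exact Hn).
  rewrite !snorm_ssq, E.
  assert (Hbk : 0 <= (beta * beta) ^ k) by (apply pow_le; nra).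
  apply Rle_trans with (sqrt ((beta * beta) ^ k * ssq n p y)).
  - apply sqrt_le_1_alt. eapply Rle_trans; [exact H1|]. apply Rmult_le_compat_l; assumption.
  - rewrite sqrt_mult by (try apply ssq_nonneg; assumption).
    right. f_equal. rewrite Rpow_mult_distr. apply sqrt_square. apply pow_le. exact Hb.
Qed.

Lemma step_lemma n p f g mu Lf alpha xstar Lmax mb Lb (xs : svec) :
  (0 < n)%nat ->
  (forall i, (i < n)%nat -> strongly_convex p (mu i) (f i) (g i)) ->
  (forall i, (i < n)%nat -> lipschitz_grad p (Lf i) (g i)) ->
  (forall i, (i < n)%nat -> Lf i <= Lmax) -> 0 <= Lmax ->
  mb = / INR n * rsum n mu -> Lb = / INR n * rsum n Lf ->
  0 <= mb <= Lb -> 0 < mb + Lb -> 0 <= alpha -> alpha <= 2 / (mb + Lb) ->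
  0 <= 1 - 2 * alpha * mb * Lb / (mb + Lb) ->
  (forall l, (l < p)%nat -> Gbar n g xstar l = 0) ->
  vnorm p (vsub (avg n (fun i => vsub (xs i) (vscal alpha (g i (xs i))))) xstar)
  <= sqrt (1 - 2 * alpha * mb * Lb / (mb + Lb)) * vnorm p (vsub (avg n xs) xstar)
     + alpha * Lmax * snorm n p (fun i => vsub (xs i) (avg n xs)).
Proof.
  intros Hn Hsc Hlip HLm HLm0 Emb ELb Hmb HmL Ha Ha2 Hc Hgz.
  assert (HnR : 0 < INR n) by (apply lt_0_INR; lia).
  set (xb := avg n xs).
  set (gb := fun l => / INR n * rsum n (fun i => g i (xs i) l)).
  set (a := vsub (vsub xb (vscal alpha (Gbar n g xb))) (vsub xstar (vscal alpha (Gbar n g xstar)))).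
  set (b := vscal alpha (vsub (Gbar n g xb) gb)).
  assert (E : vnorm p (vsub (avg n (fun i => vsub (xs i) (vscal alpha (g i (xs i))))) xstar) = vnorm p (vadd a b)).
  { apply vnorm_ext. intros l Hl. unfold a, b, vadd, vsub, vscal, avg.
    rewrite (Hgz l Hl). unfold gb, xb, avg. rewrite rsum_minus. rewrite (rsum_scal n alpha). unfold Gbar. field. lra. }
  rewrite E. eapply Rle_trans; [apply vnorm_triangle|].
  apply Rplus_le_compat.
  - assert (Hsc' := hbar_sc n p f g mu Hn Hsc). rewrite <- Emb in Hsc'.
    assert (Hl' := Gbar_lip n p g Lf Hn Hlip). rewrite <- ELb in Hl'.
    assert (H := contract p (hbar n f) (Gbar n g) mb Lb alpha Hmb HmL Hsc' Hl' Ha Ha2 xb xstar).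
    fold a in H. unfold vnorm. rewrite <- sqrt_mult by (try apply dot_nonneg; lra).
    apply sqrt_le_1_alt. exact H.
  - unfold b. rewrite vnorm_scal, Rabs_right by lra. rewrite Rmult_assoc.
    apply Rmult_le_compat_l; [lra|].
    set (S := snorm n p (fun i => vsub (xs i) xb)).
    rewrite (vnorm_ext p _ (vscal (/ INR n) (fun l => rsum n (fun i => vsub (g i xb) (g i (xs i)) l)))).
    + rewrite vnorm_scal, Rabs_right by (left; apply Rinv_0_lt_compat; lra).
      eapply Rle_trans.
      { apply Rmult_le_compat_l; [left; apply Rinv_0_lt_compat; lra| apply vnorm_rsum]. }
      apply Rle_trans with (/ INR n * rsum n (fun _ => Lmax * S)).
      * apply Rmult_le_compat_l; [left; apply Rinv_0_lt_compat; lra|].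
        apply rsum_le. intros i Hi.
        eapply Rle_trans; [apply Hlip; exact Hi|].
        assert (Hv : vnorm p (vsub xb (xs i)) <= S).
        { rewrite vnorm_vsub_sym. apply (term_le_snorm n p (fun i => vsub (xs i) xb)). exact Hi. }
        assert (0 <= vnorm p (vsub xb (xs i))) by apply vnorm_nonneg.
        assert (HL := HLm i Hi).
        apply Rle_trans with (Lmax * vnorm p (vsub xb (xs i))).
        -- apply Rmult_le_compat_r; lra.
        -- apply Rmult_le_compat_l; lra.
      * rewrite rsum_const. right. field. lra.
    + intros l Hl. unfold vsub, vscal, Gbar, gb. rewrite rsum_minus. ring.
Qed.

Lemma final_ind (E : nat -> R) (C rho beta a c3 : R) :
  (forall k, 0 <= E k) -> E 0%nat <= C -> 0 <= C -> 0 < a < 1 -> 0 <= c3 ->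
  0 <= beta <= rho -> 1 - a / 4 <= rho * rho -> 4 * (c3 * c3) <= a * (C * C) ->
  (forall k, E (S k) * E (S k) <= (1 - a / 2) * (E k * E k) + c3 * c3 * (beta ^ k * beta ^ k)) ->
  forall k, E k <= C * rho ^ k.
Proof.
  intros HE0 H0 HC Ha Hc3 Hb Hrho HCc Hrec.
  induction k.
  - simpl. lra.
  - set (P := rho ^ k) in *. set (Bk := beta ^ k).
    assert (HP : 0 <= P) by (apply pow_le; lra).
    assert (HBk : 0 <= Bk) by (apply pow_le; lra).
    assert (HBP : Bk <= P) by (apply pow_incr; lra).
    assert (HEk := HE0 k). assert (HEk1 := HE0 (S k)).
    assert (H1 : E k * E k <= (C * P) * (C * P)) by (apply Rmult_le_compat; lra).
    assert (H2 : Bk * Bk <= P * P) by (apply Rmult_le_compat; lra).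
    assert (H3 : (1 - a / 2) * (E k * E k) <= (1 - a / 2) * ((C * P) * (C * P)))
      by (apply Rmult_le_compat_l; lra).
    assert (H4 : c3 * c3 * (Bk * Bk) <= c3 * c3 * (P * P))
      by (apply Rmult_le_compat_l; [apply Rle_0_sqr| exact H2]).
    assert (H5 : 4 * (c3 * c3) * (P * P) <= a * (C * C) * (P * P))
      by (apply Rmult_le_compat_r; [apply Rle_0_sqr| exact HCc]).
    assert (H6 : (1 - a / 4) * (C * P * (C * P)) <= rho * rho * (C * P * (C * P)))
      by (apply Rmult_le_compat_r; [apply Rle_0_sqr| exact Hrho]).
    assert (H7 : E (S k) * E (S k) <= (C * (rho * P)) * (C * (rho * P))).
    { assert (Hr := Hrec k). fold P Bk in Hr.
      replace ((C * (rho * P)) * (C * (rho * P))) with (rho * rho * (C * P * (C * P))) by ring.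
      assert (Ex : (1 - a / 2) * (C * P * (C * P)) + c3 * c3 * (P * P) <=
                   (1 - a / 4) * (C * P * (C * P))).
      { replace ((1 - a / 2) * (C * P * (C * P))) with ((1 - a / 4) * (C * P * (C * P)) - a / 4 * (C * C) * (P * P)) by field.
        lra. }
      lra. }
    assert (HCP : 0 <= C * (rho * P)) by (apply Rmult_le_pos; [lra| apply Rmult_le_pos; lra]).
    change (E (S k) <= C * (rho * P)). apply Rsqr_incr_0_var; [unfold Rsqr; exact H7| exact HCP].
Qed.

Theorem theorem4
  (n p : nat) (W : nat -> nat -> R) (beta : R)
  (f : nat -> vec -> R) (g : nat -> vec -> vec) (mu Lf : nat -> R)
  (xstar : vec) (ustar : svec) (s0 : vec) (alpha : R) :
  (* network *)
  symmetric_mx n W ->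
  doubly_stochastic n W ->
  (forall i, (i < n)%nat -> 0 < W i i) ->
  connected_net n W ->
  simple_eig_one n W ->
  other_eigs_in_open_unit n W ->
  is_slem n W beta ->
  0 < beta < 1 ->
  (* local functions *)
  (forall i, (i < n)%nat -> is_gradient p (f i) (g i)) ->
  (forall i, (i < n)%nat -> 0 < mu i) ->
  (forall i, (i < n)%nat -> strongly_convex p (mu i) (f i) (g i)) ->
  (forall i, (i < n)%nat -> lipschitz_grad p (Lf i) (g i)) ->
  (forall i, (i < n)%nat -> is_minimizer (f i) (ustar i)) ->
  is_minimizer (fun x => rsum n (fun i => f i x)) xstar ->
  let L := max_upto n Lf in
  let mubar := / INR n * rsum n mu in
  let Lbar := / INR n * rsum n Lf in
  let c2 := 2 * mubar * Lbar / (mubar + Lbar) in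
  let c4 := 2 / (mubar + Lbar) in
  0 < alpha -> alpha <= Rmin (/ L) c4 -> alpha * c2 < 1 ->
  let nu := 2 * alpha * min_upto n (fun i => mu i * Lf i / (mu i + Lf i)) in
  let y0 : svec := fun _ => s0 in
  let D := snorm n p (fun i => vsub (y0 i) (ustar i))
           + (nu + 4) / nu * snorm n p ustar in
  let delta := c2 / (2 * (1 - alpha * c2)) in
  let c3 := sqrt (alpha * (alpha + / delta)) * D * L in
  let xbar := fun k => avg n (near_dgd_x n W g alpha s0 k) in
  let C := Rmax (vnorm p (vsub (xbar 0%nat) xstar)) (2 * c3 / sqrt (alpha * c2)) in
  let rho := Rmax beta (sqrt (1 - alpha * c2 / 4)) in
  forall k : nat, vnorm p (vsub (xbar k) xstar) <= C * rho ^ k.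
Proof.
  intros Hsym HW Hwii Hconn Hsimple Hother Hslem Hbeta Hgrad Hmupos Hsc Hlip Hmin Hxmin
         L mubar Lbar c2 c4 Ha Hamin Hac2 nu y0 D delta c3 xbar C rho.
  assert (HC0 : 0 <= C) by (eapply Rle_trans; [apply vnorm_nonneg| apply Rmax_l]).
  assert (Hbr : beta <= rho) by apply Rmax_l.
  destruct (Nat.eq_dec p 0) as [Hp0|Hp0].
  { intros k. subst p. unfold vnorm, dot. simpl. rewrite sqrt_0.
    apply Rmult_le_pos; [exact HC0| apply pow_le; lra]. }
  assert (Hp : (0 < p)%nat) by lia.
  assert (Hn : (0 < n)%nat).
  { destruct Hslem as [[lam [[v [[i [Hi _]] _]] _]] _]. lia. }
  assert (HnR : 0 < INR n) by (apply lt_0_INR; lia).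
  assert (HmuL : forall i, (i < n)%nat -> mu i <= Lf i).
  { intros i Hi. apply (mu_le_L p (f i) (g i)); auto. }
  assert (HLpos : forall i, (i < n)%nat -> 0 < Lf i).
  { intros i Hi. assert (H1 := HmuL i Hi). assert (H2 := Hmupos i Hi). lra. }
  assert (HLge : forall i, (i < n)%nat -> Lf i <= L) by (intros; apply max_upto_ge; assumption).
  assert (HL0 : 0 < L) by (assert (H1 := HLge 0%nat Hn); assert (H2 := HLpos 0%nat Hn); lra).
  assert (HaL : alpha <= / L) by (eapply Rle_trans; [exact Hamin| apply Rmin_l]).
  assert (Hac4 : alpha <= c4) by (eapply Rle_trans; [exact Hamin| apply Rmin_r]).
  assert (HaL1 : alpha * L <= 1).
  { apply (Rmult_le_compat_r L) in HaL; [|lra]. rewrite Rinv_l in HaL by lra. exact HaL. }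
  assert (Hsmu : 0 < rsum n mu).
  { eapply Rlt_le_trans; [apply (Hmupos 0%nat Hn)|].
    apply (rsum_ge_term n mu 0%nat); [intros; left; apply Hmupos; assumption| exact Hn]. }
  assert (Hmub : 0 < mubar) by (unfold mubar; apply Rmult_lt_0_compat; [apply Rinv_0_lt_compat|]; lra).
  assert (HmLb : mubar <= Lbar).
  { unfold mubar, Lbar. apply Rmult_le_compat_l; [left; apply Rinv_0_lt_compat; lra|].
    apply rsum_le. exact HmuL. }
  assert (Hc2 : 0 < c2).
  { unfold c2. apply Rmult_lt_0_compat; [|apply Rinv_0_lt_compat; lra].
    apply Rmult_lt_0_compat; lra. }
  assert (Hc2e : 2 * alpha * mubar * Lbar / (mubar + Lbar) = alpha * c2) by (unfold c2; field; lra).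
  assert (Hac2p : 0 < alpha * c2) by (apply Rmult_lt_0_compat; lra).
  assert (Hhsc := hbar_sc n p f g mu Hn Hsc). fold mubar in Hhsc.
  assert (Hhlip := Gbar_lip n p g Lf Hn Hlip). fold Lbar in Hhlip.
  assert (Hgz : forall l, (l < p)%nat -> Gbar n g xstar l = 0).
  { apply (grad_zero p (hbar n f) (Gbar n g) mubar Lbar xstar); [lra| exact Hhsc| exact Hhlip|].
    apply hbar_min; assumption. }
  assert (Hgu : forall i l, (i < n)%nat -> (l < p)%nat -> g i (ustar i) l = 0).
  { intros i l Hi Hl. apply (grad_zero p (f i) (g i) (mu i) (Lf i) (ustar i)); auto.
    left; apply Hmupos; exact Hi. }
  set (mn := min_upto n (fun i => mu i * Lf i / (mu i + Lf i))) in nu.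
  assert (Hmn : 0 < mn).
  { apply min_upto_pos; [exact Hn|]. intros i Hi.
    assert (H1 := Hmupos i Hi). assert (H2 := HLpos i Hi).
    apply Rmult_lt_0_compat; [apply Rmult_lt_0_compat; lra| apply Rinv_0_lt_compat; lra]. }
  assert (Hmni : forall i, (i < n)%nat -> mn <= mu i * Lf i / (mu i + Lf i)).
  { intros i Hi. apply (min_upto_le n (fun i => mu i * Lf i / (mu i + Lf i))). exact Hi. }
  assert (Hhalf : forall i, (i < n)%nat -> mu i * Lf i / (mu i + Lf i) <= Lf i / 2).
  { intros i Hi. assert (H1 := Hmupos i Hi). assert (H2 := HLpos i Hi). assert (H3 := HmuL i Hi).
    apply (Rmult_le_reg_r (mu i + Lf i)); [lra|].
    replace (mu i * Lf i / (mu i + Lf i) * (mu i + Lf i)) with (mu i * Lf i) by (field; lra).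
    replace (Lf i / 2 * (mu i + Lf i)) with (mu i * Lf i / 2 + Lf i * Lf i / 2) by field.
    assert (mu i * Lf i <= Lf i * Lf i) by (apply Rmult_le_compat_r; lra). lra. }
  assert (Hnu : 0 < nu <= 1).
  { unfold nu. split; [apply Rmult_lt_0_compat; lra|].
    assert (H1 := Hmni 0%nat Hn). assert (H2 := Hhalf 0%nat Hn). assert (H3 := HLge 0%nat Hn).
    assert (mn <= L / 2) by lra.
    assert (2 * alpha * mn <= 2 * alpha * (L / 2)) by (apply Rmult_le_compat_l; lra).
    lra. }
  assert (Hloc : forall i x, (i < n)%nat ->
     dot p (vsub (vsub x (vscal alpha (g i x))) (ustar i)) (vsub (vsub x (vscal alpha (g i x))) (ustar i))
     <= (1 - nu) * dot p (vsub x (ustar i)) (vsub x (ustar i))).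
  { intros i x Hi.
    assert (H1 := Hmupos i Hi). assert (H2 := HLpos i Hi). assert (H3 := HmuL i Hi).
    assert (H4 := HLge i Hi).
    assert (Ha2 : alpha <= 2 / (mu i + Lf i)).
    { apply (Rmult_le_reg_r (mu i + Lf i)); [lra|].
      replace (2 / (mu i + Lf i) * (mu i + Lf i)) with 2 by (field; lra).
      assert (alpha * Lf i <= alpha * L) by (apply Rmult_le_compat_l; lra).
      assert (alpha * mu i <= alpha * Lf i) by (apply Rmult_le_compat_l; lra). lra. }
    assert (Hc := contract p (f i) (g i) (mu i) (Lf i) alpha ltac:(lra) ltac:(lra)
                     (Hsc i Hi) (Hlip i Hi) ltac:(lra) Ha2 x (ustar i)).
    assert (E : dot p (vsub (vsub x (vscal alpha (g i x))) (ustar i)) (vsub (vsub x (vscal alpha (g i x))) (ustar i))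
              = dot p (vsub (vsub x (vscal alpha (g i x))) (vsub (ustar i) (vscal alpha (g i (ustar i)))))
                      (vsub (vsub x (vscal alpha (g i x))) (vsub (ustar i) (vscal alpha (g i (ustar i)))))).
    { apply dot_ext; intros l Hl; unfold vsub, vscal; rewrite Hgu by assumption; ring. }
    rewrite E. eapply Rle_trans; [exact Hc|].
    apply Rmult_le_compat_r; [apply dot_nonneg|].
    assert (H5 := Hmni i Hi).
    assert (E2 : 2 * alpha * mu i * Lf i / (mu i + Lf i) = 2 * alpha * (mu i * Lf i / (mu i + Lf i)))
      by (field; lra).
    rewrite E2. unfold nu.
    assert (2 * alpha * mn <= 2 * alpha * (mu i * Lf i / (mu i + Lf i))) by (apply Rmult_le_compat_l; lra).
    lra. }
  assert (Hbd : forall k, snorm n p (near_dgd_y n W g alpha s0 k) <= D).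
  { intros k. exact (bounded_iter n p W g alpha s0 ustar nu HW Hnu Hloc k). }
  assert (HD : 0 <= D) by (eapply Rle_trans; [apply snorm_nonneg| apply (Hbd 0%nat)]).
  assert (Hcons : forall k, snorm n p (fun i => vsub (near_dgd_x n W g alpha s0 k i) (xbar k)) <= beta ^ k * D).
  { intros k. unfold xbar, near_dgd_x.
    eapply Rle_trans; [apply (consensus n p W beta); [exact Hn|exact Hsym|exact HW|exact Hsimple|exact Hslem|lra]|].
    apply Rmult_le_compat_l; [apply pow_le; lra| apply Hbd]. }
  set (E := fun k => vnorm p (vsub (xbar k) xstar)).
  assert (Hstep : forall k, E (S k) <= sqrt (1 - alpha * c2) * E k + alpha * L * (beta ^ k * D)).
  { intros k. set (xk := near_dgd_x n W g alpha s0 k).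
    assert (E1 : E (S k) = vnorm p (vsub (avg n (fun i => vsub (xk i) (vscal alpha (g i (xk i))))) xstar)).
    { unfold E. apply vnorm_ext. intros l Hl. unfold vsub at 1 3. f_equal.
      unfold xbar, near_dgd_x. rewrite avg_Zpow by exact HW. reflexivity. }
    rewrite E1.
    assert (Hs := step_lemma n p f g mu Lf alpha xstar L mubar Lbar xk Hn Hsc Hlip HLge ltac:(lra)
                   eq_refl eq_refl ltac:(lra) ltac:(lra) ltac:(lra) ltac:(unfold c4 in Hac4; lra)
                   ltac:(rewrite Hc2e; lra) Hgz).
    rewrite Hc2e in Hs. eapply Rle_trans; [exact Hs|].
    apply Rplus_le_compat_l. apply Rmult_le_compat_l; [apply Rmult_le_pos; lra|].
    apply Hcons. }
  assert (Hdel : 0 < delta) by (unfold delta; apply Rdiv_lt_0_compat; lra).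
  set (dp := alpha * delta).
  assert (Hdp : 0 < dp) by (unfold dp; apply Rmult_lt_0_compat; lra).
  assert (Hc3sq : c3 * c3 = alpha * (alpha + / delta) * (D * D) * (L * L)).
  { unfold c3. replace (sqrt (alpha * (alpha + / delta)) * D * L * (sqrt (alpha * (alpha + / delta)) * D * L))
      with ((sqrt (alpha * (alpha + / delta)) * sqrt (alpha * (alpha + / delta))) * (D * D) * (L * L)) by ring.
    rewrite sqrt_sqrt; [reflexivity|].
    apply Rmult_le_pos; [lra|]. assert (0 < / delta) by (apply Rinv_0_lt_compat; lra). lra. }
  assert (Hc30 : 0 <= c3).
  { unfold c3. apply Rmult_le_pos; [apply Rmult_le_pos; [apply sqrt_pos| exact HD]| lra]. }
  apply (final_ind E C rho beta (alpha * c2) c3).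
  - intros. apply vnorm_nonneg.
  - apply Rmax_l.
  - exact HC0.
  - lra.
  - exact Hc30.
  - lra.
  - assert (Hs := Rmax_r beta (sqrt (1 - alpha * c2 / 4))). fold rho in Hs.
    assert (H0 := sqrt_pos (1 - alpha * c2 / 4)).
    assert (H1 : sqrt (1 - alpha * c2 / 4) * sqrt (1 - alpha * c2 / 4) = 1 - alpha * c2 / 4)
      by (apply sqrt_sqrt; lra).
    rewrite <- H1. apply Rmult_le_compat; lra.
  - assert (Hs := Rmax_r (vnorm p (vsub (xbar 0%nat) xstar)) (2 * c3 / sqrt (alpha * c2))). fold C in Hs.
    assert (Hsq : 0 < sqrt (alpha * c2)) by (apply sqrt_lt_R0; lra).
    assert (Hq0 : 0 <= 2 * c3 / sqrt (alpha * c2)) by (apply Rmult_le_pos; [lra| left; apply Rinv_0_lt_compat; lra]).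
    assert (HCC : (2 * c3 / sqrt (alpha * c2)) * (2 * c3 / sqrt (alpha * c2)) <= C * C)
      by (apply Rmult_le_compat; lra).
    assert (E2 : (2 * c3 / sqrt (alpha * c2)) * (2 * c3 / sqrt (alpha * c2)) = 4 * (c3 * c3) / (alpha * c2)).
    { unfold Rdiv. replace (2 * c3 * / sqrt (alpha * c2) * (2 * c3 * / sqrt (alpha * c2)))
        with (4 * (c3 * c3) * / (sqrt (alpha * c2) * sqrt (alpha * c2))) by (field; lra).
      rewrite sqrt_sqrt by lra. reflexivity. }
    rewrite E2 in HCC.
    apply (Rmult_le_compat_l (alpha * c2)) in HCC; [|lra].
    replace (alpha * c2 * (4 * (c3 * c3) / (alpha * c2))) with (4 * (c3 * c3)) in HCC by (field; lra).
    exact HCC.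
  - intros k.
    assert (Hs := Hstep k).
    set (A := sqrt (1 - alpha * c2) * E k) in *.
    set (Bn := alpha * L * (beta ^ k * D)) in *.
    assert (HA : 0 <= A) by (apply Rmult_le_pos; [apply sqrt_pos| apply vnorm_nonneg]).
    assert (HB : 0 <= Bn).
    { apply Rmult_le_pos; [apply Rmult_le_pos; lra| apply Rmult_le_pos; [apply pow_le; lra| exact HD]]. }
    assert (HES : 0 <= E (S k)) by apply vnorm_nonneg.
    assert (H1 : E (S k) * E (S k) <= (A + Bn) * (A + Bn)) by (apply Rmult_le_compat; lra).
    assert (H2 : (A + Bn) * (A + Bn) <= (1 + dp) * (A * A) + (1 + / dp) * (Bn * Bn)).
    { assert (Hy : 2 * A * Bn <= dp * (A * A) + / dp * (Bn * Bn)).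
      { assert (H0 : 0 <= (dp * A - Bn) * (dp * A - Bn)) by apply Rle_0_sqr.
        apply (Rmult_le_reg_l dp); [exact Hdp|].
        replace (dp * (dp * (A * A) + / dp * (Bn * Bn))) with (dp * A * (dp * A) + Bn * Bn) by (field; lra).
        lra. }
      lra. }
    assert (HAA : A * A = (1 - alpha * c2) * (E k * E k)).
    { unfold A. replace (sqrt (1 - alpha * c2) * E k * (sqrt (1 - alpha * c2) * E k))
        with ((sqrt (1 - alpha * c2) * sqrt (1 - alpha * c2)) * (E k * E k)) by ring.
      rewrite sqrt_sqrt by lra. reflexivity. }
    assert (Hk1 : (1 + dp) * (1 - alpha * c2) = 1 - alpha * c2 / 2).
    { unfold dp, delta. field. lra. }
    assert (Hk2 : (1 + / dp) * (Bn * Bn) = c3 * c3 * (beta ^ k * beta ^ k)).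
    { rewrite Hc3sq. unfold Bn, dp. field. split; lra. }
    rewrite HAA in H2. rewrite Hk2 in H2.
    replace ((1 + dp) * ((1 - alpha * c2) * (E k * E k))) with ((1 + dp) * (1 - alpha * c2) * (E k * E k)) in H2 by ring.
    rewrite Hk1 in H2. lra.
Qed.
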